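(* Let $0<D<1$ be a constant as in the following statement: for all sufficiently large $k$, with $m=\lfloor D(2k+1)\rfloor$, there is an orthonormal set $\{u_i\}_{i=1}^m\subset\mathcal{SH}_k$ with $\|u_i\|_{L^p}\ge\frac12 C_pk^{\sigma(p)}$ for all $i$ and all $2<p\le6$ (e.g. any $D$ with $(7+1296D)e^{-1/(72D)}\le 1/25$, such as $D=1/400$). Then for all sufficiently large $k$ there exists an orthonormal basis $\{u_i\}_{i=1}^{2k+1}$ of $\mathcal{SH}_k$ such that $$\frac1{2k+1}\sum_{i=1}^{2k+1}\|u_i\|_{L^p(\mathbb S^2)}\ \ge\ \frac D3\, C_pk^{\sigma(p)}\qquad\text{for all } 2<p\le 6.$$
   Context: $\mathbb S^2\subset\mathbb R^3$ is the round unit sphere; $\mathcal{SH}_k$ is the $(2k+1)$-dimensional space of spherical harmonics of degree $k$ (eigenfunctions of $-\Delta$ with eigenvalue $k(k+1)$), with the $L^2(\mathbb S^2)$ inner product. With coordinates $x=(\sin\phi\cos\theta,\sin\phi\sin\theta,\cos\phi)$, the Gaussian beam is $Q_k(\phi,\theta)=C_kP_k^k(\cos\phi)e^{ik\theta}$, $L^2$-normalized; $\sigma(p)=\tfrac12(\tfrac12-\tfrac1p)$, and $C_pk^{\sigma(p)}$ denotes $\|Q_k\|_{L^p(\mathbb S^2)}$. *)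

(* Defs.v *)
From Stdlib Require Import Reals Lra.
From Coquelicot Require Import Coquelicot.
Open Scope R_scope.

Fixpoint csum (n : nat) (f : nat -> C) : C :=
  match n with O => RtoC 0 | S n' => Cplus (csum n' f) (f n') end.
Fixpoint rsum (n : nat) (f : nat -> R) : R :=
  match n with O => 0 | S n' => rsum n' f + f n' end.

Definition rpow (x y : R) : R := if Rle_dec x 0 then 0 else Rpower x y.

Definition sph (phi theta : R) : R * R * R :=
  (sin phi * cos theta, sin phi * sin theta, cos phi).

Definition sph_int (g : R -> R -> R) : R :=
  RInt (fun theta => RInt (fun phi => g phi theta * sin phi) 0 PI) 0 (2 * PI).

Definition Lp_norm_sph (p : R) (g : R -> R -> C) : R :=
  rpow (sph_int (fun phi theta => rpow (Cmod (g phi theta)) p)) (/ p).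

Definition fun3 := R -> R -> R -> C.
Definition on_sph (f : fun3) : R -> R -> C :=
  fun phi theta => let '(x, y, z) := sph phi theta in f x y z.
Definition Lp_norm (p : R) (f : fun3) : R := Lp_norm_sph p (on_sph f).

Definition inner (f g : fun3) : C :=
  (sph_int (fun phi theta => Re (Cmult (on_sph f phi theta) (Cconj (on_sph g phi theta)))),
   sph_int (fun phi theta => Im (Cmult (on_sph f phi theta) (Cconj (on_sph g phi theta))))).

Definition lap3 (g : R -> R -> R -> R) (x y z : R) : R :=
  Derive (fun t => Derive (fun s => g s y z) t) x
  + Derive (fun t => Derive (fun s => g x s z) t) y
  + Derive (fun t => Derive (fun s => g x y s) t) z.

Definition homog_poly (k : nat) (f : fun3) : Prop :=
  exists c : nat -> nat -> C, forall x y z,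
    f x y z = csum (S k) (fun a => csum (S (k - a)) (fun b =>
       Cmult (c a b) (RtoC (x ^ a * y ^ b * z ^ (k - a - b))))).

(* SH_k: (restrictions to S^2 of) homogeneous harmonic polynomials of degree k. *)
Definition SH (k : nat) (f : fun3) : Prop :=
  homog_poly k f /\
  forall x y z, lap3 (fun a b c => Re (f a b c)) x y z = 0 /\
                lap3 (fun a b c => Im (f a b c)) x y z = 0.

Definition kron (i j : nat) : C := if Nat.eqb i j then RtoC 1 else RtoC 0.

Definition orthonormal (n : nat) (u : nat -> fun3) : Prop :=
  forall i j, (i < n)%nat -> (j < n)%nat -> inner (u i) (u j) = kron i j.

Definition ONB_SH (k : nat) (u : nat -> fun3) : Prop :=
  (forall i, (i < 2 * k + 1)%nat -> SH k (u i)) /\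
  orthonormal (2 * k + 1) u /\
  (forall f, SH k f -> exists a : nat -> C, forall x y z,
      f x y z = csum (2 * k + 1) (fun i => Cmult (a i) (u i x y z))).

(* Associated Legendre function P_k^k(t) = (-1)^k (2k-1)!! (1-t^2)^{k/2}. *)
Fixpoint dfact_odd (k : nat) : R :=
  match k with O => 1 | S k' => INR (2 * k' + 1) * dfact_odd k' end.
Definition Pkk (k : nat) (t : R) : R :=
  (-1) ^ k * dfact_odd k * (sqrt (1 - t ^ 2)) ^ k.

Definition Qk_raw (k : nat) : R -> R -> C :=
  fun phi theta => Cmult (RtoC (Pkk k (cos phi)))
                         (cos (INR k * theta), sin (INR k * theta)).
Definition Ck (k : nat) : R := / Lp_norm_sph 2 (Qk_raw k).
Definition Qk (k : nat) : R -> R -> C :=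
  fun phi theta => Cmult (RtoC (Ck k)) (Qk_raw k phi theta).

Definition mD (D : R) (k : nat) : nat := Z.to_nat (Int_part (D * INR (2 * k + 1))).

(* Main.v *)
Require Import Defs.
From Stdlib Require Import Reals Lra Lia ZArith FunctionalExtensionality List.
From Coquelicot Require Import Coquelicot.
Open Scope R_scope.

Lemma Cext : forall a b : C, fst a = fst b -> snd a = snd b -> a = b.
Proof. intros [a1 a2] [b1 b2]; simpl; intros -> ->; auto. Qed.
Ltac csimpl := cbn [fst snd RtoC Cplus Cmult Cconj Re Im].
Ltac cring := apply Cext; csimpl; ring.

Lemma csum_ext n f g : (forall i, (i < n)%nat -> f i = g i) -> csum n f = csum n g.
Proof. induction n; simpl; intros H; auto. rewrite IHn by (intros; apply H; lia). rewrite H by lia; auto. Qed.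
Lemma rsum_ext n f g : (forall i, (i < n)%nat -> f i = g i) -> rsum n f = rsum n g.
Proof. induction n; simpl; intros H; auto. rewrite IHn by (intros; apply H; lia). rewrite H by lia; auto. Qed.
Lemma Re_csum n f : fst (csum n f) = rsum n (fun i => fst (f i)).
Proof. induction n; simpl; auto. rewrite IHn; auto. Qed.
Lemma Im_csum n f : snd (csum n f) = rsum n (fun i => snd (f i)).
Proof. induction n; simpl; auto. rewrite IHn; auto. Qed.
Lemma csum_plus n f g : csum n (fun i => Cplus (f i) (g i)) = Cplus (csum n f) (csum n g).
Proof. induction n; simpl. cring. rewrite IHn. cring. Qed.
Lemma csum_scal n c f : csum n (fun i => Cmult c (f i)) = Cmult c (csum n f).
Proof. induction n; simpl. cring. rewrite IHn. cring. Qed.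
Lemma rsum_plus n f g : rsum n (fun i => f i + g i) = rsum n f + rsum n g.
Proof. induction n; simpl. ring. rewrite IHn. ring. Qed.
Lemma rsum_scal n c f : rsum n (fun i => c * f i) = c * rsum n f.
Proof. induction n; simpl. ring. rewrite IHn. ring. Qed.
Lemma rsum_zero n f : (forall i, (i < n)%nat -> f i = 0) -> rsum n f = 0.
Proof. induction n; simpl; intros H; auto. rewrite IHn by (intros; apply H; lia). rewrite H by lia; ring. Qed.
Lemma csum_zero n f : (forall i, (i < n)%nat -> f i = RtoC 0) -> csum n f = RtoC 0.
Proof. induction n; simpl; intros H; auto. rewrite IHn by (intros; apply H; lia). rewrite H by lia; cring. Qed.
Lemma rsum_le n f g : (forall i, (i < n)%nat -> f i <= g i) -> rsum n f <= rsum n g.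
Proof. induction n; simpl; intros H. lra. assert (H1 := H n (Nat.lt_succ_diag_r n)).
  assert (rsum n f <= rsum n g) by (apply IHn; intros; apply H; lia). lra. Qed.
Lemma rsum_const n c : rsum n (fun _ => c) = INR n * c.
Proof. induction n; simpl rsum. simpl; ring. rewrite IHn, S_INR; ring. Qed.
Lemma rsum_swap n m F : rsum n (fun i => rsum m (fun j => F i j)) = rsum m (fun j => rsum n (fun i => F i j)).
Proof. induction n; simpl. rewrite rsum_zero; auto. rewrite IHn, <- rsum_plus; auto. Qed.
Lemma csum_swap n m F : csum n (fun i => csum m (fun j => F i j)) = csum m (fun j => csum n (fun i => F i j)).
Proof. induction n; simpl. rewrite csum_zero; auto. rewrite IHn, <- csum_plus; auto. Qed.
Lemma rsum_front n f : rsum (S n) f = f O + rsum n (fun i => f (S i)).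
Proof. induction n. simpl; ring. change (rsum (S (S n)) f) with (rsum (S n) f + f (S n)). rewrite IHn. simpl. ring. Qed.
Lemma csum_front n f : csum (S n) f = Cplus (f O) (csum n (fun i => f (S i))).
Proof. induction n. simpl; cring. change (csum (S (S n)) f) with (Cplus (csum (S n) f) (f (S n))). rewrite IHn. simpl. cring. Qed.
Lemma rsum_tail n m f : (m <= n)%nat -> (forall i, (m <= i)%nat -> f i = 0) -> rsum n f = rsum m f.
Proof. induction 1; intros Hf; auto. simpl. rewrite IHle by auto. rewrite Hf by lia. ring. Qed.
Lemma csum_tail n m f : (m <= n)%nat -> (forall i, (m <= i)%nat -> f i = RtoC 0) -> csum n f = csum m f.
Proof. induction 1; intros Hf; auto. simpl. rewrite IHle by auto. rewrite Hf by lia. cring. Qed.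
Lemma csum_kron n a l : (l < n)%nat -> csum n (fun i => Cmult (a i) (kron i l)) = a l.
Proof. intros Hl. induction n. lia. simpl. destruct (Nat.eq_dec l n).
  - subst. rewrite csum_zero. unfold kron; rewrite Nat.eqb_refl. cring.
    intros i Hi. unfold kron. replace (Nat.eqb i n) with false by (symmetry; apply Nat.eqb_neq; lia). cring.
  - rewrite IHn by lia. unfold kron. replace (Nat.eqb n l) with false by (symmetry; apply Nat.eqb_neq; lia). cring. Qed.
Lemma rsum_delta n j g : (j < n)%nat -> rsum n (fun e => if Nat.eqb e j then g e else 0) = g j.
Proof. intros Hj. induction n. lia. simpl. destruct (Nat.eq_dec j n).
  - subst. rewrite rsum_zero. rewrite Nat.eqb_refl. ring.
    intros i Hi. replace (Nat.eqb i n) with false by (symmetry; apply Nat.eqb_neq; lia). auto.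
  - rewrite IHn by lia. replace (Nat.eqb n j) with false by (symmetry; apply Nat.eqb_neq; lia). ring. Qed.
Lemma rsum_nonneg n f : (forall i, (i < n)%nat -> 0 <= f i) -> 0 <= rsum n f.
Proof. intros H. rewrite <- (rsum_zero n (fun _ => 0)) by auto. apply rsum_le; auto. Qed.

Definition cont (f : R -> R) := forall x, continuous f x.
Lemma cont_const c : cont (fun _ => c).
Proof. intros x; apply continuous_const. Qed.
Lemma cont_id : cont (fun x => x).
Proof. intros x; apply continuous_id. Qed.
Lemma cont_mult f g : cont f -> cont g -> cont (fun x => f x * g x).
Proof. intros Hf Hg x. exact (continuous_mult f g x (Hf x) (Hg x)). Qed.
Lemma cont_plus f g : cont f -> cont g -> cont (fun x => f x + g x).
Proof. intros Hf Hg x. exact (continuous_plus f g x (Hf x) (Hg x)). Qed.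
Lemma cont_sin : cont sin.
Proof. intros x. apply continuity_pt_filterlim. apply continuity_sin. Qed.
Lemma cont_cos : cont cos.
Proof. intros x. apply continuity_pt_filterlim. apply continuity_cos. Qed.
Lemma cont_ext f g : (forall x, f x = g x) -> cont f -> cont g.
Proof. intros H Hf x. apply (continuous_ext f g x H (Hf x)). Qed.

Lemma ex_RInt_cont f a b : cont f -> ex_RInt f a b.
Proof. intros Hf. apply (@ex_RInt_continuous R_CompleteNormedModule). intros; apply Hf. Qed.
Lemma RInt_plusR f g a b : cont f -> cont g -> RInt (fun x => f x + g x) a b = RInt f a b + RInt g a b.
Proof. intros Hf Hg. exact (RInt_plus f g a b (ex_RInt_cont f a b Hf) (ex_RInt_cont g a b Hg)). Qed.
Lemma RInt_scalR f c a b : cont f -> RInt (fun x => c * f x) a b = c * RInt f a b.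
Proof. intros Hf. exact (RInt_scal f a b c (ex_RInt_cont f a b Hf)). Qed.

Lemma RInt_extR (f g : R -> R) a b : (forall x, f x = g x) -> RInt f a b = RInt g a b.
Proof. intros H. apply RInt_ext. intros; apply H. Qed.

Lemma PS g a b t0 : a < t0 < b -> cont g -> (forall x, a <= x <= b -> 0 <= g x) -> 0 < g t0 -> 0 < RInt g a b.
Proof.
  intros [Ha Hb] Hg Hnn Hpos.
  assert (Hc : continuity_pt g t0) by (apply continuity_pt_filterlim; apply Hg).
  destruct (Hc (g t0 / 2)) as [alp [Halp Hal]]. lra.
  assert (Hloc : forall x, Rabs (x - t0) < alp -> 0 < g x).
  { intros x Hx. destruct (Req_dec x t0). subst; auto.
    assert (HH := Hal x). simpl in HH. unfold R_dist in HH.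
    assert (Rabs (g x - g t0) < g t0 / 2) by (apply HH; split; [split; [exact I| auto] | auto]).
    apply Rabs_def2 in H0. lra. }
  set (d := Rmin (alp/2) (Rmin ((t0-a)/2) ((b-t0)/2))).
  assert (Hd0 : 0 < d). { unfold d. repeat apply Rmin_pos; lra. }
  assert (Hd1 : d <= alp/2) by apply Rmin_l.
  assert (Hd2 : d <= (t0-a)/2) by (eapply Rle_trans; [apply Rmin_r|apply Rmin_l]).
  assert (Hd3 : d <= (b-t0)/2) by (eapply Rle_trans; [apply Rmin_r|apply Rmin_r]).
  assert (E1 := RInt_Chasles g a (t0-d) b (ex_RInt_cont _ _ _ Hg) (ex_RInt_cont _ _ _ Hg)).
  assert (E2 := RInt_Chasles g (t0-d) (t0+d) b (ex_RInt_cont _ _ _ Hg) (ex_RInt_cont _ _ _ Hg)).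
  change plus with Rplus in E1, E2. simpl in E1, E2.
  rewrite <- E1, <- E2.
  assert (0 <= RInt g a (t0-d)). { apply RInt_ge_0. lra. apply ex_RInt_cont; auto. intros; apply Hnn; lra. }
  assert (0 <= RInt g (t0+d) b). { apply RInt_ge_0. lra. apply ex_RInt_cont; auto. intros; apply Hnn; lra. }
  assert (0 < RInt g (t0-d) (t0+d)). { apply RInt_gt_0. lra. intros; apply Hloc. apply Rabs_def1; lra. intros; apply Hg. }
  lra.
Qed.

Fixpoint sepv (l : list ((R->R)*(R->R))) (p t : R) : R :=
  match l with nil => 0 | q :: l' => fst q p * snd q t + sepv l' p t end.
Definition SepL (l : list ((R->R)*(R->R))) := forall q, In q l -> cont (fst q) /\ cont (snd q).
Definition Sep (F : R -> R -> R) := exists l, SepL l /\ forall p t, F p t = sepv l p t.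

Lemma Sep_ext F G : (forall p t, F p t = G p t) -> Sep F -> Sep G.
Proof. intros H [l [Hl HF]]. exists l; split; auto. intros; rewrite <- H; auto. Qed.
Lemma Sep_single u v : cont u -> cont v -> Sep (fun p t => u p * v t).
Proof. intros. exists ((u,v)::nil). split. intros q [<-|[]]; auto. intros; simpl; ring. Qed.
Lemma sepv_app l1 l2 p t : sepv (l1 ++ l2) p t = sepv l1 p t + sepv l2 p t.
Proof. induction l1; simpl; auto. ring. rewrite IHl1; ring. Qed.
Lemma Sep_plus F G : Sep F -> Sep G -> Sep (fun p t => F p t + G p t).
Proof. intros [l1 [H1 F1]] [l2 [H2 F2]]. exists (l1 ++ l2). split.
  intros q Hq. apply in_app_or in Hq. destruct Hq; auto.
  intros. rewrite sepv_app, F1, F2; auto. Qed.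
Definition mulp (q r : (R->R)*(R->R)) : (R->R)*(R->R) := (fun x => fst q x * fst r x, fun y => snd q y * snd r y).
Lemma sepv_map q l p t : sepv (map (mulp q) l) p t = fst q p * snd q t * sepv l p t.
Proof. induction l; simpl. ring. rewrite IHl. unfold mulp; simpl. ring. Qed.
Lemma sepv_prod l1 l2 p t : sepv (flat_map (fun q => map (mulp q) l2) l1) p t = sepv l1 p t * sepv l2 p t.
Proof. induction l1; simpl. ring. rewrite sepv_app, sepv_map, IHl1. ring. Qed.
Lemma Sep_mult F G : Sep F -> Sep G -> Sep (fun p t => F p t * G p t).
Proof. intros [l1 [H1 F1]] [l2 [H2 F2]]. exists (flat_map (fun q => map (mulp q) l2) l1). split.
  - intros q Hq. apply in_flat_map in Hq. destruct Hq as [q1 [Hq1 Hq2]]. apply in_map_iff in Hq2.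
    destruct Hq2 as [q2 [<- Hq2]]. destruct (H1 q1 Hq1), (H2 q2 Hq2). unfold mulp; simpl; split; apply cont_mult; auto.
  - intros. rewrite sepv_prod, F1, F2; auto. Qed.
Lemma Sep_const c : Sep (fun _ _ => c).
Proof. apply (Sep_ext (fun p t => (fun _ => c) p * (fun _ => 1) t)). intros; ring. apply Sep_single; apply cont_const. Qed.
Lemma Sep_scal c F : Sep F -> Sep (fun p t => c * F p t).
Proof. intros; apply Sep_mult; auto. apply Sep_const. Qed.
Lemma Sep_pow F n : Sep F -> Sep (fun p t => F p t ^ n).
Proof. intros H. induction n. simpl. apply Sep_const. simpl. apply Sep_mult; auto. Qed.
Lemma Sep_rsum n F : (forall i, (i < n)%nat -> Sep (F i)) -> Sep (fun p t => rsum n (fun i => F i p t)).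
Proof. induction n; intros H; simpl. apply Sep_const. apply Sep_plus. apply IHn; intros; apply H; lia. apply H; lia. Qed.
Lemma Sep_u u : cont u -> Sep (fun p t => u p).
Proof. intros. apply (Sep_ext (fun p t => u p * (fun _ => 1) t)). intros; ring. apply Sep_single; auto; apply cont_const. Qed.
Lemma Sep_v v : cont v -> Sep (fun p t => v t).
Proof. intros. apply (Sep_ext (fun p t => (fun _ => 1) p * v t)). intros; ring. apply Sep_single; auto; apply cont_const. Qed.

Definition IntOK (F : R -> R -> R) :=
  (forall t, cont (fun p => F p t)) /\ cont (fun t => RInt (fun p => F p t * sin p) 0 PI).

Fixpoint sepI (l : list ((R->R)*(R->R))) (t : R) : R :=
  match l with nil => 0 | q :: l' => RInt (fun p => fst q p * sin p) 0 PI * snd q t + sepI l' t end.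

Lemma sepv_cont l t : SepL l -> cont (fun p => sepv l p t).
Proof. induction l; intros H; simpl. apply cont_const. apply cont_plus. apply cont_mult. apply (H a); left; auto. apply cont_const.
  apply IHl. intros q Hq; apply H; right; auto. Qed.
Lemma sepI_eq l t : SepL l -> RInt (fun p => sepv l p t * sin p) 0 PI = sepI l t.
Proof. induction l; intros H; simpl.
  - rewrite (RInt_extR _ (fun _ => 0)). rewrite RInt_const. unfold scal; simpl; unfold mult; simpl. ring. intros; simpl; ring.
  - assert (Ha := H a (or_introl eq_refl)).
    assert (Hl : SepL l) by (intros q Hq; apply H; right; auto).
    rewrite (RInt_extR _ (fun p => snd a t * (fst a p * sin p) + sepv l p t * sin p)) by (intros; ring).
    rewrite RInt_plusR. rewrite RInt_scalR. rewrite IHl; auto. ring.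
    apply cont_mult. apply Ha. apply cont_sin.
    apply cont_mult. apply cont_const. apply cont_mult. apply Ha. apply cont_sin.
    apply cont_mult. apply sepv_cont; auto. apply cont_sin.
Qed.
Lemma sepI_cont l : SepL l -> cont (sepI l).
Proof. induction l; intros H; simpl. apply cont_const. apply cont_plus. apply cont_mult. apply cont_const. apply (H a); left; auto.
  apply IHl. intros q Hq; apply H; right; auto. Qed.
Lemma Sep_IntOK F : Sep F -> IntOK F.
Proof. intros [l [Hl HF]]. split.
  - intros t. apply (cont_ext (fun p => sepv l p t)). intros; auto. apply sepv_cont; auto.
  - apply (cont_ext (sepI l)). intros t. rewrite <- sepI_eq; auto. apply RInt_extR. intros; rewrite HF; auto.
    apply sepI_cont; auto. Qed.

Lemma sph_int_ext F G : (forall p t, F p t = G p t) -> sph_int F = sph_int G.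
Proof. intros H. unfold sph_int. apply RInt_ext. intros. apply RInt_ext. intros. rewrite H; auto. Qed.
Lemma sph_int_plus F G : IntOK F -> IntOK G -> sph_int (fun p t => F p t + G p t) = sph_int F + sph_int G.
Proof. intros [F1 F2] [G1 G2]. unfold sph_int.
  rewrite (RInt_extR _ (fun t => RInt (fun p => F p t * sin p) 0 PI + RInt (fun p => G p t * sin p) 0 PI)).
  apply RInt_plusR; auto.
  intros t. rewrite <- RInt_plusR. apply RInt_extR; intros; ring.
  apply cont_mult; auto. apply cont_sin. apply cont_mult; auto. apply cont_sin. Qed.
Lemma sph_int_scal c F : IntOK F -> sph_int (fun p t => c * F p t) = c * sph_int F.
Proof. intros [F1 F2]. unfold sph_int.
  rewrite (RInt_extR _ (fun t => c * RInt (fun p => F p t * sin p) 0 PI)).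
  apply RInt_scalR; auto.
  intros t. rewrite <- RInt_scalR. apply RInt_extR; intros; ring.
  apply cont_mult; auto. apply cont_sin. Qed.
Lemma sin_nonneg_0PI x : 0 <= x <= PI -> 0 <= sin x.
Proof. intros; apply sin_ge_0; lra. Qed.
Lemma sph_int_nonneg F : IntOK F -> (forall p t, 0 <= F p t) -> 0 <= sph_int F.
Proof. intros [F1 F2] H. unfold sph_int. apply RInt_ge_0. assert (0 < PI) by apply PI_RGT_0. lra.
  apply ex_RInt_cont; auto. intros t _. apply RInt_ge_0. assert (0 < PI) by apply PI_RGT_0. lra.
  apply ex_RInt_cont; auto. apply cont_mult; auto. apply cont_sin.
  intros x Hx. apply Rmult_le_pos; auto. apply sin_nonneg_0PI; lra. Qed.
Lemma sph_int_pos F p0 t0 : IntOK F -> (forall p t, 0 <= F p t) -> 0 < p0 < PI -> 0 < t0 < 2 * PI -> 0 < F p0 t0 -> 0 < sph_int F.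
Proof. intros [F1 F2] H Hp Ht Hpos. unfold sph_int. apply (PS _ _ _ t0); auto.
  - intros t _. apply RInt_ge_0. lra. apply ex_RInt_cont; auto. apply cont_mult; auto. apply cont_sin.
    intros x Hx. apply Rmult_le_pos; auto. apply sin_nonneg_0PI; lra.
  - apply (PS _ _ _ p0); auto. apply cont_mult; auto. apply cont_sin.
    intros x Hx. apply Rmult_le_pos; auto. apply sin_nonneg_0PI; lra.
    apply Rmult_lt_0_compat; auto. apply sin_gt_0; lra. Qed.

Definition hpoly (k : nat) (c : nat -> nat -> C) : fun3 := fun x y z =>
  csum (S k) (fun a => csum (S (k - a)) (fun b => Cmult (c a b) (RtoC (x ^ a * y ^ b * z ^ (k - a - b))))).
Definition fadd (f g : fun3) : fun3 := fun x y z => Cplus (f x y z) (g x y z).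
Definition fscal (c : C) (f : fun3) : fun3 := fun x y z => Cmult c (f x y z).

Lemma HP_get k f : homog_poly k f -> exists c, forall x y z, f x y z = hpoly k c x y z.
Proof. exact (fun H => H). Qed.

Lemma hpoly_plus k c d x y z : Cplus (hpoly k c x y z) (hpoly k d x y z) = hpoly k (fun a b => Cplus (c a b) (d a b)) x y z.
Proof. unfold hpoly. rewrite <- csum_plus. apply csum_ext. intros a _. rewrite <- csum_plus. apply csum_ext. intros; cring. Qed.
Lemma hpoly_scal k e c x y z : Cmult e (hpoly k c x y z) = hpoly k (fun a b => Cmult e (c a b)) x y z.
Proof. unfold hpoly. rewrite <- csum_scal. apply csum_ext. intros a _. rewrite <- csum_scal. apply csum_ext. intros; cring. Qed.

Lemma HP_add k f g : homog_poly k f -> homog_poly k g -> homog_poly k (fadd f g).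
Proof. intros [c Hc] [d Hd]. exists (fun a b => Cplus (c a b) (d a b)). intros. unfold fadd. rewrite Hc, Hd. apply hpoly_plus. Qed.
Lemma HP_scal k e f : homog_poly k f -> homog_poly k (fscal e f).
Proof. intros [c Hc]. exists (fun a b => Cmult e (c a b)). intros. unfold fscal. rewrite Hc. apply hpoly_scal. Qed.
Lemma HP_zero k : homog_poly k (fun _ _ _ => RtoC 0).
Proof. exists (fun _ _ => RtoC 0). intros. unfold hpoly. symmetry; apply csum_zero. intros; apply csum_zero. intros; cring. Qed.
Lemma HP_combo k n a e : (forall i, (i < n)%nat -> homog_poly k (e i)) ->
  homog_poly k (fun x y z => csum n (fun i => Cmult (a i) (e i x y z))).
Proof. induction n; intros H; simpl. apply HP_zero.
  apply (HP_add k (fun x y z => csum n (fun i => Cmult (a i) (e i x y z))) (fscal (a n) (e n))).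
  apply IHn; intros; apply H; lia. apply HP_scal. apply H; lia. Qed.

Lemma on_sph_eq f p t : on_sph f p t = f (sin p * cos t) (sin p * sin t) (cos p).
Proof. reflexivity. Qed.

Lemma Sep_mono a b e : Sep (fun p t => (sin p * cos t) ^ a * (sin p * sin t) ^ b * cos p ^ e).
Proof. apply Sep_mult. apply Sep_mult. apply Sep_pow. apply Sep_mult. apply Sep_u, cont_sin. apply Sep_v, cont_cos.
  apply Sep_pow. apply Sep_mult. apply Sep_u, cont_sin. apply Sep_v, cont_sin. apply Sep_pow. apply Sep_u, cont_cos. Qed.

Lemma fst_hpoly k c x y z : fst (hpoly k c x y z) =
  rsum (S k) (fun a => rsum (S (k - a)) (fun b => fst (c a b) * (x ^ a * y ^ b * z ^ (k - a - b)))).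
Proof. unfold hpoly. rewrite Re_csum. apply rsum_ext. intros. rewrite Re_csum. apply rsum_ext. intros. simpl. ring. Qed.
Lemma snd_hpoly k c x y z : snd (hpoly k c x y z) =
  rsum (S k) (fun a => rsum (S (k - a)) (fun b => snd (c a b) * (x ^ a * y ^ b * z ^ (k - a - b)))).
Proof. unfold hpoly. rewrite Im_csum. apply rsum_ext. intros. rewrite Im_csum. apply rsum_ext. intros. simpl. ring. Qed.

Lemma Sep_hpoly_gen k (r : nat -> nat -> R) :
  Sep (fun p t => rsum (S k) (fun a => rsum (S (k - a)) (fun b => r a b *
     ((sin p * cos t) ^ a * (sin p * sin t) ^ b * (cos p) ^ (k - a - b))))).
Proof. apply (Sep_rsum _ (fun a p t => rsum (S (k - a)) (fun b => r a b *
     ((sin p * cos t) ^ a * (sin p * sin t) ^ b * (cos p) ^ (k - a - b))))).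
  intros a _. apply (Sep_rsum _ (fun b p t => r a b *
     ((sin p * cos t) ^ a * (sin p * sin t) ^ b * (cos p) ^ (k - a - b)))).
  intros b _. apply Sep_scal. apply Sep_mono. Qed.

Lemma Sep_re k f : homog_poly k f -> Sep (fun p t => fst (on_sph f p t)).
Proof. intros H; destruct (HP_get _ _ H) as [c Hc]. eapply Sep_ext. 2: apply (Sep_hpoly_gen k (fun a b => fst (c a b))).
  intros. rewrite on_sph_eq, Hc, fst_hpoly. auto. Qed.
Lemma Sep_im k f : homog_poly k f -> Sep (fun p t => snd (on_sph f p t)).
Proof. intros H; destruct (HP_get _ _ H) as [c Hc]. eapply Sep_ext. 2: apply (Sep_hpoly_gen k (fun a b => snd (c a b))).
  intros. rewrite on_sph_eq, Hc, snd_hpoly. auto. Qed.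

Definition ire (f g : fun3) p t := fst (on_sph f p t) * fst (on_sph g p t) + snd (on_sph f p t) * snd (on_sph g p t).
Definition iim (f g : fun3) p t := snd (on_sph f p t) * fst (on_sph g p t) - fst (on_sph f p t) * snd (on_sph g p t).

Lemma inner_eq f g : inner f g = (sph_int (ire f g), sph_int (iim f g)).
Proof. unfold inner. f_equal; apply sph_int_ext; intros; unfold ire, iim; simpl; ring. Qed.

Lemma Sep_ire k f g : homog_poly k f -> homog_poly k g -> Sep (ire f g).
Proof. intros Hf Hg. unfold ire. apply Sep_plus; apply Sep_mult; first [eapply Sep_re; eauto | eapply Sep_im; eauto]. Qed.
Lemma Sep_iim k f g : homog_poly k f -> homog_poly k g -> Sep (iim f g).
Proof. intros Hf Hg. unfold iim. apply (Sep_ext (fun p t => snd (on_sph f p t) * fst (on_sph g p t) + (-1) * (fst (on_sph f p t) * snd (on_sph g p t)))).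
  intros; ring. apply Sep_plus. apply Sep_mult; first [eapply Sep_re; eauto | eapply Sep_im; eauto].
  apply Sep_scal. apply Sep_mult; first [eapply Sep_re; eauto | eapply Sep_im; eauto]. Qed.

Lemma sph_int_zero : sph_int (fun _ _ => 0) = 0.
Proof. rewrite (sph_int_ext _ (fun p t => 0 * (fun _ _ => 0) p t)) by (intros; ring).
  rewrite sph_int_scal. ring. apply Sep_IntOK, Sep_const. Qed.

Section Inner.
Variable k : nat.
Lemma inner_add_l f g h : homog_poly k f -> homog_poly k g -> homog_poly k h ->
  inner (fadd f g) h = Cplus (inner f h) (inner g h).
Proof. intros Hf Hg Hh. rewrite !inner_eq. apply Cext; simpl.
  - rewrite <- sph_int_plus. apply sph_int_ext. intros. unfold ire, fadd. rewrite !on_sph_eq. simpl. ring.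
    apply Sep_IntOK; eapply Sep_ire; eauto. apply Sep_IntOK; eapply Sep_ire; eauto.
  - rewrite <- sph_int_plus. apply sph_int_ext. intros. unfold iim, fadd. rewrite !on_sph_eq. simpl. ring.
    apply Sep_IntOK; eapply Sep_iim; eauto. apply Sep_IntOK; eapply Sep_iim; eauto. Qed.
Lemma inner_scal_l c f h : homog_poly k f -> homog_poly k h ->
  inner (fscal c f) h = Cmult c (inner f h).
Proof. intros Hf Hh. rewrite !inner_eq. destruct c as [c1 c2]. apply Cext; simpl.
  - rewrite (sph_int_ext _ (fun p t => c1 * ire f h p t + (- c2) * iim f h p t)).
    rewrite sph_int_plus, !sph_int_scal. ring.
    1,2: apply Sep_IntOK; eapply Sep_iim || eapply Sep_ire; eauto.
    1,2: apply Sep_IntOK; apply Sep_scal; eapply Sep_iim || eapply Sep_ire; eauto.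
    intros. unfold ire, iim, fscal. rewrite !on_sph_eq. simpl. ring.
  - rewrite (sph_int_ext _ (fun p t => c1 * iim f h p t + c2 * ire f h p t)).
    rewrite sph_int_plus, !sph_int_scal. ring.
    1,2: apply Sep_IntOK; eapply Sep_iim || eapply Sep_ire; eauto.
    1,2: apply Sep_IntOK; apply Sep_scal; eapply Sep_iim || eapply Sep_ire; eauto.
    intros. unfold ire, iim, fscal. rewrite !on_sph_eq. simpl. ring. Qed.
Lemma inner_conj f g : homog_poly k f -> homog_poly k g -> inner g f = Cconj (inner f g).
Proof. intros Hf Hg. rewrite !inner_eq. unfold Cconj; simpl. f_equal.
  - apply sph_int_ext. intros; unfold ire; ring.
  - rewrite (sph_int_ext _ (fun p t => (-1) * iim f g p t)). rewrite sph_int_scal. ring.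
    apply Sep_IntOK; eapply Sep_iim; eauto. intros; unfold iim; ring. Qed.
Lemma inner_self_im f : homog_poly k f -> snd (inner f f) = 0.
Proof. intros Hf. rewrite inner_eq. simpl. rewrite <- sph_int_zero. apply sph_int_ext. intros; unfold iim; ring. Qed.
Lemma inner_self_nonneg f : homog_poly k f -> 0 <= fst (inner f f).
Proof. intros Hf. rewrite inner_eq. simpl. apply sph_int_nonneg. apply Sep_IntOK; eapply Sep_ire; eauto.
  intros; unfold ire. nra. Qed.
Lemma inner_zero_l h : inner (fun _ _ _ => RtoC 0) h = RtoC 0.
Proof. rewrite inner_eq. apply Cext; simpl.
  transitivity (sph_int (fun _ _ => 0)). apply sph_int_ext; intros; unfold ire; rewrite !on_sph_eq; simpl; ring. apply sph_int_zero.
  transitivity (sph_int (fun _ _ => 0)). apply sph_int_ext; intros; unfold iim; rewrite !on_sph_eq; simpl; ring. apply sph_int_zero. Qed.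
End Inner.

Lemma hpoly_homog k c t x y z : hpoly k c (t*x) (t*y) (t*z) = Cmult (RtoC (t^k)) (hpoly k c x y z).
Proof. unfold hpoly. rewrite <- csum_scal. apply csum_ext. intros a Ha. rewrite <- csum_scal. apply csum_ext. intros b Hb.
  replace (t^k) with (t^a * t^b * t^(k-a-b)). rewrite !Rpow_mult_distr. cring.
  rewrite <- !pow_add. f_equal. lia. Qed.
Lemma HP_homog k f t x y z : homog_poly k f -> f (t*x) (t*y) (t*z) = Cmult (RtoC (t^k)) (f x y z).
Proof. intros H. destruct (HP_get _ _ H) as [c Hc]. rewrite !Hc. apply hpoly_homog. Qed.

Lemma cont_pow n : cont (fun s => s ^ n).
Proof. induction n; simpl. apply cont_const. apply cont_mult; auto. apply cont_id. Qed.
Lemma cont_rsum n F : (forall i, (i < n)%nat -> cont (F i)) -> cont (fun s => rsum n (fun i => F i s)).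
Proof. induction n; intros H; simpl. apply cont_const. apply cont_plus. apply IHn; intros; apply H; lia. apply H; lia. Qed.

Lemma Z0 g : cont g -> (forall s, s <> 0 -> g s = 0) -> g 0 = 0.
Proof. intros Hg Hz. destruct (Req_dec (g 0) 0) as [|Hne]; auto. exfalso.
  assert (Hc : continuity_pt g 0) by (apply continuity_pt_filterlim; apply Hg).
  destruct (Hc (Rabs (g 0) / 2)) as [alp [Halp Hal]]. apply Rabs_pos_lt in Hne. lra.
  assert (HH := Hal (alp/2)). simpl in HH. unfold R_dist in HH.
  rewrite Hz in HH by lra. assert (Rabs (0 - g 0) < Rabs (g 0) / 2).
  apply HH. split. split. exact I. lra. rewrite Rminus_0_r, Rabs_right; lra.
  rewrite Rminus_0_l, Rabs_Ropp in H. apply Rabs_pos_lt in Hne. lra. Qed.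

Lemma acos_open u : -1 < u < 1 -> 0 < acos u < PI.
Proof. intros Hu. destruct (acos_bound u). split.
  - destruct H; auto. exfalso. assert (cos (acos u) = u) by (apply cos_acos; lra). rewrite <- H in H1. rewrite cos_0 in H1. lra.
  - destruct H0; auto. exfalso. assert (cos (acos u) = u) by (apply cos_acos; lra). rewrite H0 in H1. rewrite cos_PI in H1. lra. Qed.

Section PD.
Variable k : nat.
Variable f : fun3.
Hypothesis Hf : homog_poly k f.

Lemma pd_sph : fst (inner f f) = 0 -> forall p t, 0 < p < PI -> 0 < t < 2 * PI -> on_sph f p t = RtoC 0.
Proof. intros H0 p t Hp Ht. destruct (Req_dec (fst (on_sph f p t)) 0) as [H1|H1];
  [destruct (Req_dec (snd (on_sph f p t)) 0) as [H2|H2]|].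
  - apply Cext; simpl; auto.
  - exfalso. assert (0 < fst (inner f f)). rewrite inner_eq. simpl. apply (sph_int_pos _ p t); auto.
    apply Sep_IntOK; eapply Sep_ire; eauto. intros; unfold ire; nra. unfold ire. nra. lra.
  - exfalso. assert (0 < fst (inner f f)). rewrite inner_eq. simpl. apply (sph_int_pos _ p t); auto.
    apply Sep_IntOK; eapply Sep_ire; eauto. intros; unfold ire; nra. unfold ire. nra. lra. Qed.

Lemma pd_pos : fst (inner f f) = 0 -> forall x y z, 0 < y -> f x y z = RtoC 0.
Proof. intros H0 x y z Hy.
  assert (Hq : 0 < x*x+y*y) by nra. assert (Hr : 0 < x*x+y*y+z*z) by nra.
  set (rho := sqrt (x*x+y*y)). set (r := sqrt (x*x+y*y+z*z)).
  assert (Hrho : 0 < rho) by (apply sqrt_lt_R0; auto). assert (Hr0 : 0 < r) by (apply sqrt_lt_R0; auto).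
  assert (Hrho2 : rho * rho = x*x+y*y) by (apply sqrt_sqrt; lra).
  assert (Hr2 : r * r = x*x+y*y+z*z) by (apply sqrt_sqrt; lra).
  set (u := x / rho). set (w := z / r).
  assert (Hxu : x = u * rho) by (unfold u; field; lra).
  assert (Hzw : z = w * r) by (unfold w; field; lra).
  assert (Hu : -1 < u < 1). { assert (u*u < 1). { assert (u*u*(rho*rho) < 1*(rho*rho)) by nra. nra. } nra. }
  assert (Hw : -1 < w < 1). { assert (w*w < 1). { assert (w*w*(r*r) < 1*(r*r)) by nra. nra. } nra. }
  set (th := acos u). set (ph := acos w).
  assert (Hth := acos_open u Hu). assert (Hph := acos_open w Hw).
  assert (Ec1 : cos th = u) by (apply cos_acos; lra). assert (Ec2 : cos ph = w) by (apply cos_acos; lra).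
  assert (Es1 : sin th = y / rho).
  { unfold th. rewrite sin_acos by lra. replace (1 - u²) with ((y/rho)²). apply sqrt_Rsqr.
    apply Rlt_le, Rdiv_lt_0_compat; lra. unfold Rsqr, u. field_simplify_eq; [nra | lra]. }
  assert (Es2 : sin ph = rho / r).
  { unfold ph. rewrite sin_acos by lra. replace (1 - w²) with ((rho/r)²). apply sqrt_Rsqr.
    apply Rlt_le, Rdiv_lt_0_compat; lra. unfold Rsqr, w. field_simplify_eq; [nra | lra]. }
  assert (E : f x y z = f (r*(x/r)) (r*(y/r)) (r*(z/r))) by (f_equal; field; lra).
  rewrite E, (HP_homog k) by auto.
  assert (E2 : f (x/r) (y/r) (z/r) = on_sph f ph th).
  { rewrite on_sph_eq, Ec1, Ec2, Es1, Es2. f_equal. unfold u; field; lra. field; lra.  }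
  rewrite E2, pd_sph; auto. cring. assert (PI < 2 * PI) by (assert (0 < PI) by apply PI_RGT_0; lra). unfold th; lra.
Qed.

Lemma inner_pd : fst (inner f f) = 0 -> forall x y z, f x y z = RtoC 0.
Proof. intros H0.
  assert (Hne : forall x y z, y <> 0 -> f x y z = RtoC 0).
  { intros x y z Hy. destruct (Rlt_or_le 0 y). apply pd_pos; auto.
    replace x with ((-1) * (-x)) by ring. replace y with ((-1) * (-y)) by ring. replace z with ((-1) * (-z)) by ring.
    rewrite (HP_homog k) by auto. rewrite pd_pos; auto. cring. lra. }
  intros x y z. destruct (HP_get _ _ Hf) as [c Hc].
  assert (G1 : fst (f x 0 z) = 0).
  { apply (Z0 (fun s => fst (f x s z))).
    - apply (cont_ext (fun s => rsum (S k) (fun a => rsum (S (k - a)) (fun b => fst (c a b) * (x ^ a * s ^ b * z ^ (k - a - b)))))).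
      intros s. rewrite Hc, fst_hpoly. auto.
      apply (cont_rsum _ (fun a s => rsum (S (k - a)) (fun b => fst (c a b) * (x ^ a * s ^ b * z ^ (k - a - b))))).
      intros a _. apply (cont_rsum _ (fun b s => fst (c a b) * (x ^ a * s ^ b * z ^ (k - a - b)))).
      intros b _. apply cont_mult. apply cont_const. apply cont_mult. apply cont_mult. apply cont_const. apply cont_pow. apply cont_const.
    - intros s Hs. rewrite Hne; auto. }
  assert (G2 : snd (f x 0 z) = 0).
  { apply (Z0 (fun s => snd (f x s z))).
    - apply (cont_ext (fun s => rsum (S k) (fun a => rsum (S (k - a)) (fun b => snd (c a b) * (x ^ a * s ^ b * z ^ (k - a - b)))))).
      intros s. rewrite Hc, snd_hpoly. auto.
      apply (cont_rsum _ (fun a s => rsum (S (k - a)) (fun b => snd (c a b) * (x ^ a * s ^ b * z ^ (k - a - b))))).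
      intros a _. apply (cont_rsum _ (fun b s => snd (c a b) * (x ^ a * s ^ b * z ^ (k - a - b)))).
      intros b _. apply cont_mult. apply cont_const. apply cont_mult. apply cont_mult. apply cont_const. apply cont_pow. apply cont_const.
    - intros s Hs. rewrite Hne; auto. }
  destruct (Req_dec y 0). subst. apply Cext; simpl; auto. apply Hne; auto.
Qed.
End PD.

Definition combo (n : nat) (a : nat -> C) (e : nat -> fun3) : fun3 :=
  fun x y z => csum n (fun i => Cmult (a i) (e i x y z)).
Definition InSpan (n : nat) (e : nat -> fun3) (g : fun3) :=
  exists a, forall x y z, g x y z = combo n a e x y z.
Definition ext (n : nat) (e : nat -> fun3) (e' : fun3) : nat -> fun3 :=
  fun i => if Nat.ltb i n then e i else e'.
Definition nsq (c : C) := fst c * fst c + snd c * snd c.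

Lemma fun3_ext (f g : fun3) : (forall x y z, f x y z = g x y z) -> f = g.
Proof. intros H. apply functional_extensionality; intros x. apply functional_extensionality; intros y.
  apply functional_extensionality; intros z. auto. Qed.
Lemma Cconj_csum n F : Cconj (csum n F) = csum n (fun i => Cconj (F i)).
Proof. induction n; simpl. cring. rewrite <- IHn. cring. Qed.
Lemma ext_lt n e e' i : (i < n)%nat -> ext n e e' i = e i.
Proof. intros H. unfold ext. replace (Nat.ltb i n) with true; auto. symmetry; apply Nat.ltb_lt; auto. Qed.
Lemma ext_eq n e e' : ext n e e' n = e'.
Proof. unfold ext. rewrite Nat.ltb_irrefl. auto. Qed.

Lemma InSpan_ext n e f g : (forall x y z, f x y z = g x y z) -> InSpan n e f -> InSpan n e g.
Proof. intros H [a Ha]. exists a. intros; rewrite <- H; auto. Qed.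
Lemma InSpan_add n e f g : InSpan n e f -> InSpan n e g -> InSpan n e (fadd f g).
Proof. intros [a Ha] [b Hb]. exists (fun i => Cplus (a i) (b i)). intros. unfold fadd, combo. rewrite Ha, Hb.
  unfold combo. rewrite <- csum_plus. apply csum_ext. intros; cring. Qed.
Lemma InSpan_scal n e c f : InSpan n e f -> InSpan n e (fscal c f).
Proof. intros [a Ha]. exists (fun i => Cmult c (a i)). intros. unfold fscal, combo. rewrite Ha.
  unfold combo. rewrite <- csum_scal. apply csum_ext. intros; cring. Qed.
Lemma InSpan_zero n e : InSpan n e (fun _ _ _ => RtoC 0).
Proof. exists (fun _ => RtoC 0). intros. unfold combo. symmetry; apply csum_zero; intros; cring. Qed.
Lemma InSpan_combo n e p b g : (forall i, (i < p)%nat -> InSpan n e (g i)) -> InSpan n e (combo p b g).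
Proof. induction p; intros H. apply InSpan_zero. change (InSpan n e (fadd (combo p b g) (fscal (b p) (g p)))).
  apply InSpan_add. apply IHp; intros; apply H; lia. apply InSpan_scal; apply H; lia. Qed.
Lemma InSpan_mono n e n' e' g : InSpan n e g -> (n <= n')%nat -> (forall i, (i < n)%nat -> e' i = e i) -> InSpan n' e' g.
Proof. intros [a Ha] Hn He. exists (fun i => if Nat.ltb i n then a i else RtoC 0). intros. rewrite Ha. unfold combo.
  rewrite (csum_tail n' n) by (auto; intros i Hi; replace (Nat.ltb i n) with false by (symmetry; apply Nat.ltb_ge; lia); cring).
  apply csum_ext. intros i Hi. rewrite He by auto. replace (Nat.ltb i n) with true by (symmetry; apply Nat.ltb_lt; lia). auto. Qed.
Lemma InSpan_self n e j : (j < n)%nat -> InSpan n e (e j).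
Proof. intros Hj. exists (fun i => kron i j). intros. unfold combo. rewrite (csum_ext _ _ (fun i => Cmult (e i x y z) (kron i j))).
  rewrite csum_kron; auto. intros; cring. Qed.

Lemma Cmult_conj_self c : Cmult c (Cconj c) = RtoC (nsq c).
Proof. unfold nsq. cring. Qed.
Lemma nsq_conj c : nsq (Cconj c) = nsq c.
Proof. unfold nsq; simpl; ring. Qed.
Lemma nsq_nonneg c : 0 <= nsq c.
Proof. unfold nsq; nra. Qed.

Arguments inner : simpl never.
Arguments combo : simpl never.
Section LinAlg.
Variable k : nat.
Variable V : fun3 -> Prop.
Hypothesis V_HP : forall f, V f -> homog_poly k f.
Hypothesis V_add : forall f g, V f -> V g -> V (fadd f g).
Hypothesis V_scal : forall c f, V f -> V (fscal c f).
Hypothesis V_zero : V (fun _ _ _ => RtoC 0).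

Lemma V_combo n a e : (forall i, (i < n)%nat -> V (e i)) -> V (combo n a e).
Proof. induction n; intros H. apply V_zero. change (V (fadd (combo n a e) (fscal (a n) (e n)))).
  apply V_add. apply IHn; intros; apply H; lia. apply V_scal; apply H; lia. Qed.

Lemma inner_combo_l n a e h : (forall i, (i < n)%nat -> homog_poly k (e i)) -> homog_poly k h ->
  inner (combo n a e) h = csum n (fun i => Cmult (a i) (inner (e i) h)).
Proof. intros He Hh. induction n. apply inner_zero_l.
  change (inner (fadd (combo n a e) (fscal (a n) (e n))) h = Cplus (csum n (fun i => Cmult (a i) (inner (e i) h))) (Cmult (a n) (inner (e n) h))).
  assert (A1 : homog_poly k (combo n a e)) by (apply HP_combo; intros; apply He; lia).
  assert (A2 : homog_poly k (e n)) by (apply He; lia).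
  rewrite inner_add_l with (k := k) by (auto; apply HP_scal; auto).
  rewrite inner_scal_l with (k := k) by auto. rewrite IHn by (intros; apply He; lia). auto. Qed.
Lemma inner_combo_r n a e h : (forall i, (i < n)%nat -> homog_poly k (e i)) -> homog_poly k h ->
  inner h (combo n a e) = csum n (fun i => Cmult (Cconj (a i)) (inner h (e i))).
Proof. intros He Hh. rewrite inner_conj with (k := k), inner_combo_l, Cconj_csum; auto.
  apply csum_ext. intros. rewrite inner_conj with (k := k) (f := h); auto. destruct (a i), (inner h (e i)). cring.
  apply HP_combo; auto. Qed.
Lemma orth_coef n a e l : orthonormal n e -> (forall i, (i < n)%nat -> homog_poly k (e i)) -> (l < n)%nat ->
  inner (combo n a e) (e l) = a l.
Proof. intros Ho He Hl. rewrite inner_combo_l; auto. rewrite (csum_ext _ _ (fun i => Cmult (a i) (kron i l))).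
  apply csum_kron; auto. intros; rewrite Ho; auto. Qed.

Lemma gs_step n e w : orthonormal n e -> (forall i, (i < n)%nat -> V (e i)) -> V w ->
  InSpan n e w \/ exists e', V e' /\ orthonormal (S n) (ext n e e') /\ InSpan (S n) (ext n e e') w /\
     exists beta a, forall x y z, e' x y z = Cplus (Cmult beta (w x y z)) (combo n a e x y z).
Proof.
  intros Ho HV Hw. set (c := fun i => inner w (e i)).
  set (r := fadd w (fscal (RtoC (-1)) (combo n c e))).
  assert (HeP : forall i, (i < n)%nat -> homog_poly k (e i)) by (intros; apply V_HP; auto).
  assert (Vr : V r) by (apply V_add; auto; apply V_scal; apply V_combo; auto).
  assert (Hr : homog_poly k r) by auto.
  assert (Hwp : homog_poly k w) by auto.
  assert (Hcp : homog_poly k (combo n c e)) by (apply HP_combo; auto).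
  assert (Ore : forall j, (j < n)%nat -> inner r (e j) = RtoC 0).
  { intros j Hj. unfold r. rewrite inner_add_l with (k := k), inner_scal_l with (k := k), orth_coef; auto.
    unfold c. cring. apply HP_scal; auto. }
  destruct (Req_dec (fst (inner r r)) 0) as [H0|H0].
  - left. exists c. intros x y z. assert (Hz := inner_pd k r Hr H0 x y z). unfold r, fadd, fscal in Hz.
    revert Hz. destruct (w x y z) as [w1 w2]. destruct (combo n c e x y z) as [c1 c2]. intros Hz.
    unfold Cplus, Cmult, RtoC in Hz; simpl in Hz. injection Hz; intros. apply Cext; simpl; lra.
  - right. assert (Hs : 0 < fst (inner r r)) by (assert (H1 := inner_self_nonneg k r Hr); lra).
    pose (nu := sqrt (fst (inner r r))). assert (Hnu : 0 < nu) by (apply sqrt_lt_R0; auto).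
    assert (Hnu2 : nu * nu = fst (inner r r)) by (apply sqrt_sqrt; lra).
    assert (Hrr : inner r r = RtoC (nu * nu)). { apply Cext. csimpl. rewrite Hnu2. reflexivity. csimpl. apply inner_self_im with (k := k); auto. }
    pose (e' := fscal (RtoC (/ nu)) r). exists e'.
    assert (He' : homog_poly k e') by (apply HP_scal; auto).
    assert (O1 : forall j, (j < n)%nat -> inner e' (e j) = RtoC 0).
    { intros. unfold e'. rewrite inner_scal_l with (k := k), Ore; auto. cring. }
    assert (O2 : inner e' e' = RtoC 1).
    { unfold e'. rewrite inner_scal_l with (k := k) by (auto; apply HP_scal; auto). rewrite inner_conj with (k := k) (g := r) by (auto; apply HP_scal; auto). rewrite inner_scal_l with (k := k), Hrr by auto.
      apply Cext; csimpl; field; lra. }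
    split; [|split; [|split]].
    + apply V_scal; auto.
    + intros i j Hi Hj. destruct (Nat.eq_dec i n); destruct (Nat.eq_dec j n); subst.
      * rewrite ext_eq. rewrite O2. unfold kron; rewrite Nat.eqb_refl; auto.
      * rewrite ext_eq, ext_lt by lia. rewrite O1 by lia. unfold kron. replace (Nat.eqb n j) with false; auto. symmetry; apply Nat.eqb_neq; lia.
      * rewrite ext_eq, ext_lt by lia. rewrite inner_conj with (k := k) (g := e i) (f := e') by (first [exact He' | apply V_HP, HV; lia]). rewrite O1 by lia. unfold kron. replace (Nat.eqb i n) with false. cring. symmetry; apply Nat.eqb_neq; lia.
      * rewrite !ext_lt by lia. apply Ho; lia.
    + exists (fun i => if Nat.ltb i n then c i else RtoC nu). intros x y z. unfold combo. simpl csum.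
      rewrite ext_eq. rewrite Nat.ltb_irrefl. rewrite (csum_ext _ _ (fun i => Cmult (c i) (e i x y z))).
      unfold e', r, fadd, fscal, combo. generalize (w x y z) (csum n (fun i => Cmult (c i) (e i x y z))).
      intros [w1 w2] [s1 s2]. apply Cext; csimpl; field; lra.
      intros i Hi. rewrite ext_lt by auto. replace (Nat.ltb i n) with true; auto. symmetry; apply Nat.ltb_lt; auto.
    + exists (RtoC (/ nu)), (fun i => Cmult (RtoC (- / nu)) (c i)). intros x y z. unfold e', r, fadd, fscal, combo.
      rewrite (csum_ext (n) (fun i => Cmult (Cmult (RtoC (- / nu)) (c i)) (e i x y z)) (fun i => Cmult (RtoC (- / nu)) (Cmult (c i) (e i x y z)))) by (intros; cring).
      rewrite csum_scal. generalize (w x y z) (csum n (fun i => Cmult (c i) (e i x y z))).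
      intros [w1 w2] [s1 s2]. cring.
Qed.
End LinAlg.

Arguments inner : simpl never.
Arguments combo : simpl never.

Definition Indep (N : nat) (h : nat -> fun3) :=
  forall a, (forall x y z, combo N a h x y z = RtoC 0) -> forall j, (j < N)%nat -> a j = RtoC 0.

Section LinAlg2.
Variable k : nat.
Variable V : fun3 -> Prop.
Hypothesis V_HP : forall f, V f -> homog_poly k f.
Hypothesis V_add : forall f g, V f -> V g -> V (fadd f g).
Hypothesis V_scal : forall c f, V f -> V (fscal c f).
Hypothesis V_zero : V (fun _ _ _ => RtoC 0).

Lemma GS_main m u N h : orthonormal m u -> (forall i, (i < m)%nat -> V (u i)) -> (forall j, (j < N)%nat -> V (h j)) ->
  exists n e, (m <= n)%nat /\ orthonormal n e /\ (forall i, (i < n)%nat -> V (e i)) /\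
    (forall i, (i < m)%nat -> e i = u i) /\ (forall j, (j < N)%nat -> InSpan n e (h j)).
Proof. intros Hou HVu. induction N; intros Hh.
  - exists m, u. split; [lia|]. split; auto. split; auto. split; auto. intros; lia.
  - destruct IHN as [n [e [Hm [Ho [HV [Hu Hs]]]]]]. intros; apply Hh; lia.
    destruct (gs_step k V V_HP V_add V_scal V_zero n e (h N) Ho HV (Hh N (Nat.lt_succ_diag_r N))) as [Hin | [e' [Ve' [Ho' [Hw _]]]]].
    + exists n, e. do 4 (split; auto). intros j Hj. destruct (Nat.eq_dec j N). subst; auto. apply Hs; lia.
    + exists (S n), (ext n e e'). split; [lia|]. split; auto. split; [|split].
      * intros i Hi. destruct (Nat.eq_dec i n). subst; rewrite ext_eq; auto. rewrite ext_lt by lia. apply HV; lia.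
      * intros i Hi. rewrite ext_lt by lia. auto.
      * intros j Hj. destruct (Nat.eq_dec j N). subst; auto.
        apply (InSpan_mono n e). apply Hs; lia. lia. intros; apply ext_lt; auto.
Qed.

Lemma GS_indep N h : (forall j, (j < N)%nat -> V (h j)) -> Indep N h ->
  exists f, orthonormal N f /\ (forall i, (i < N)%nat -> V (f i)) /\ (forall j, (j < N)%nat -> InSpan N f (h j)).
Proof. intros Hh Hind.
  assert (G : forall j, (j <= N)%nat -> exists f, orthonormal j f /\ (forall i, (i < j)%nat -> V (f i)) /\
     (forall i, (i < j)%nat -> InSpan j f (h i)) /\ (forall i, (i < j)%nat -> InSpan j h (f i))).
  { induction j; intros Hj.
    - exists (fun _ => fun _ _ _ => RtoC 0). split. intros i j' Hi; lia. split; [|split]; intros; lia.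
    - destruct IHj as [f [Ho [HV [Hs1 Hs2]]]]. lia.
      destruct (gs_step k V V_HP V_add V_scal V_zero j f (h j) Ho HV (Hh j ltac:(lia))) as [Hin | [e' [Ve' [Ho' [Hw [beta [a Ha]]]]]]].
      + exfalso.
        assert (Hin2 : InSpan j h (h j)).
        { destruct Hin as [a Ha]. eapply InSpan_ext. intros; symmetry; apply Ha. apply InSpan_combo. auto. }
        destruct Hin2 as [b Hb].
        set (al := fun i => if Nat.ltb i j then b i else if Nat.eqb i j then RtoC (-1) else RtoC 0).
        assert (Hz : forall x y z, combo N al h x y z = RtoC 0).
        { intros. unfold combo. rewrite (csum_tail N (S j)).
          2: lia. 2: { intros i Hi. unfold al. replace (Nat.ltb i j) with false by (symmetry; apply Nat.ltb_ge; lia).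
             replace (Nat.eqb i j) with false by (symmetry; apply Nat.eqb_neq; lia). cring. }
          simpl csum. rewrite (csum_ext j _ (fun i => Cmult (b i) (h i x y z))).
          2: { intros i Hi. unfold al. replace (Nat.ltb i j) with true by (symmetry; apply Nat.ltb_lt; lia). auto. }
          unfold al. rewrite Nat.ltb_irrefl, Nat.eqb_refl. rewrite (Hb x y z). unfold combo.
          generalize (csum j (fun i => Cmult (b i) (h i x y z))). intros [s1 s2]. cring. }
        assert (H1 := Hind al Hz j ltac:(lia)). unfold al in H1. rewrite Nat.ltb_irrefl, Nat.eqb_refl in H1.
        apply (f_equal fst) in H1. simpl in H1. lra.
      + exists (ext j f e'). split; auto. split; [|split].
        * intros i Hi. destruct (Nat.eq_dec i j). subst; rewrite ext_eq; auto. rewrite ext_lt by lia. apply HV; lia.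
        * intros i Hi. destruct (Nat.eq_dec i j). subst; auto.
          apply (InSpan_mono j f). apply Hs1; lia. lia. intros; apply ext_lt; auto.
        * intros i Hi. destruct (Nat.eq_dec i j).
          -- subst i. rewrite ext_eq. eapply InSpan_ext. intros; symmetry; apply Ha.
             apply (InSpan_add (S j) h (fscal beta (h j)) (combo j a f)).
             apply InSpan_scal. apply InSpan_self; lia.
             apply InSpan_combo. intros l Hl. apply (InSpan_mono j h). apply Hs2; auto. lia. auto.
          -- rewrite ext_lt by lia. apply (InSpan_mono j h). apply Hs2; lia. lia. auto. }
  destruct (G N (Nat.le_refl N)) as [f [Ho [HV [Hs1 _]]]]. exists f. auto.
Qed.

Lemma bessel n e g : orthonormal n e -> (forall i, (i < n)%nat -> homog_poly k (e i)) -> homog_poly k g ->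
  rsum n (fun i => nsq (inner g (e i))) <= fst (inner g g).
Proof. intros Ho He Hg. pose (c := fun i => inner g (e i)). pose (P := combo n c e).
  pose (r := fadd g (fscal (RtoC (-1)) P)).
  assert (HP : homog_poly k P) by (apply HP_combo; auto).
  assert (Hr : homog_poly k r) by (apply HP_add; auto; apply HP_scal; auto).
  assert (Ore : forall j, (j < n)%nat -> inner r (e j) = RtoC 0).
  { intros j Hj. unfold r. rewrite inner_add_l with (k := k) by (auto; apply HP_scal; auto).
    rewrite inner_scal_l with (k := k) by auto. unfold P. rewrite orth_coef with (k := k) by auto.
    unfold c. generalize (inner g (e j)). intros [q1 q2]. cring. }
  assert (H1 : inner r P = RtoC 0).
  { unfold P. rewrite inner_combo_r with (k := k) by auto. apply csum_zero. intros i Hi. rewrite Ore by auto. cring. }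
  assert (H1' : inner P r = RtoC 0). { rewrite inner_conj with (k := k) (f := r) by auto. rewrite H1. cring. }
  assert (H2 : inner r r = inner g r).
  { unfold r at 1. rewrite inner_add_l with (k := k) by (auto; apply HP_scal; auto).
    rewrite inner_scal_l with (k := k) by auto. rewrite H1'. generalize (inner g r). intros [q1 q2]. cring. }
  assert (H3 : inner r g = Cplus (inner g g) (Cmult (RtoC (-1)) (csum n (fun i => RtoC (nsq (c i)))))).
  { unfold r at 1. rewrite inner_add_l with (k := k) by (auto; apply HP_scal; auto).
    rewrite inner_scal_l with (k := k) by auto. f_equal. f_equal. unfold P. rewrite inner_combo_l with (k := k) by auto.
    apply csum_ext. intros i Hi. rewrite <- Cmult_conj_self. f_equal. unfold c. apply inner_conj with (k := k); auto. }
  assert (H4 : fst (inner r r) = fst (inner r g)).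
  { rewrite H2, inner_conj with (k := k) (g := g) (f := r) by auto. unfold Cconj. reflexivity. }
  assert (H5 := inner_self_nonneg k r Hr).
  rewrite H4, H3 in H5. revert H5. csimpl. rewrite Re_csum. csimpl. intros. change (rsum n (fun i => nsq (c i)) <= fst (inner g g)). lra.
Qed.

Lemma DIM p f n e : orthonormal p f -> (forall l, (l < p)%nat -> homog_poly k (f l)) ->
  orthonormal n e -> (forall i, (i < n)%nat -> homog_poly k (e i)) ->
  (forall i, (i < n)%nat -> InSpan p f (e i)) -> (n <= p)%nat.
Proof. intros Hof Hf Hoe He Hs.
  assert (C1 : forall i, (i < n)%nat -> rsum p (fun l => nsq (inner (e i) (f l))) = 1).
  { intros i Hi. destruct (Hs i Hi) as [b Hb]. apply fun3_ext in Hb.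
    assert (E1 : inner (e i) (e i) = RtoC 1). { rewrite Hoe by auto. unfold kron. rewrite Nat.eqb_refl. auto. }
    assert (Hc : homog_poly k (combo p b f)) by (apply HP_combo; auto).
    rewrite Hb in E1 |- *. rewrite (rsum_ext _ _ (fun l => nsq (b l))) by (intros; rewrite orth_coef with (k := k); auto).
    rewrite inner_combo_l with (k := k) in E1 by auto.
    rewrite (csum_ext _ _ (fun l => RtoC (nsq (b l)))) in E1.
    apply (f_equal fst) in E1. rewrite Re_csum in E1. simpl in E1. exact E1.
    intros l Hl. rewrite inner_conj with (k := k) (g := f l) (f := combo p b f) by auto. rewrite orth_coef with (k := k) by auto.
    apply Cmult_conj_self. }
  assert (C2 : forall l, (l < p)%nat -> rsum n (fun i => nsq (inner (f l) (e i))) <= 1).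
  { intros l Hl. assert (H := bessel n e (f l) Hoe He (Hf l Hl)). rewrite Hof in H by auto.
    unfold kron in H. rewrite Nat.eqb_refl in H. simpl in H. exact H. }
  assert (INR n <= INR p).
  { rewrite <- (Rmult_1_r (INR n)), <- (Rmult_1_r (INR p)), <- !rsum_const.
    rewrite (rsum_ext n _ (fun i => rsum p (fun l => nsq (inner (e i) (f l))))) by (intros; symmetry; auto).
    rewrite rsum_swap. apply rsum_le. intros l Hl. eapply Rle_trans. 2: apply (C2 l Hl).
    right. apply rsum_ext. intros i Hi. rewrite inner_conj with (k := k) (g := e i) (f := f l) by auto. apply nsq_conj. }
  apply INR_le; auto.
Qed.
End LinAlg2.

Arguments inner : simpl never.
Arguments combo : simpl never.

Lemma D_rsum n (F : nat -> R -> R) (dF : nat -> R) t :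
  (forall i, is_derive (F i) t (dF i)) -> is_derive (fun s => rsum n (fun i => F i s)) t (rsum n dF).
Proof. intros H. induction n; simpl.
  - apply (is_derive_const (V := R_NormedModule) 0 t).
  - apply (is_derive_plus (fun s => rsum n (fun i => F i s)) (F n) t); auto. Qed.
Lemma D_rsum3 n (T : nat -> nat -> nat -> R -> R) (dT : nat -> nat -> nat -> R) t :
  (forall a b e, is_derive (T a b e) t (dT a b e)) ->
  is_derive (fun s => rsum n (fun a => rsum n (fun b => rsum n (fun e => T a b e s)))) t
     (rsum n (fun a => rsum n (fun b => rsum n (fun e => dT a b e)))).
Proof. intros H. apply (D_rsum n (fun a s => rsum n (fun b => rsum n (fun e => T a b e s)))). intros a.
  apply (D_rsum n (fun b s => rsum n (fun e => T a b e s))). intros b. apply D_rsum. auto. Qed.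
Lemma D_mono K L m t : is_derive (fun s => K * s ^ m * L) t (K * (INR m * t ^ (m - 1)) * L).
Proof. auto_derive; auto. rewrite Nat.sub_1_r. ring. Qed.

Ltac rring := cbv beta; match goal with |- ?a = ?b => change (a = b :> R); ring end.
Lemma D_ext (f g : R -> R) x l l' : (forall t, f t = g t) -> l = l' -> is_derive f x l -> is_derive g x l'.
Proof. intros H1 H2 H3. subst. eapply is_derive_ext; eauto. Qed.

Definition Pbox (p : nat -> nat -> nat -> R) (n : nat) (x y z : R) : R :=
  rsum n (fun a => rsum n (fun b => rsum n (fun e => p a b e * x ^ a * y ^ b * z ^ e))).
Definition Supp (p : nat -> nat -> nat -> R) n := forall a b e, (n <= a \/ n <= b \/ n <= e)%nat -> p a b e = 0.

Lemma shift2 n G : G O = 0 -> G 1%nat = 0 -> (forall i, (n <= i)%nat -> G i = 0) -> rsum n G = rsum n (fun i => G (S (S i))).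
Proof. intros H0 H1 Hn.
  assert (E1 : rsum (S (S n)) G = rsum n G). { simpl. rewrite !Hn by lia. ring. }
  rewrite <- E1. rewrite rsum_front, rsum_front. rewrite H0, H1. ring. Qed.

Section Lap.
Variable p : nat -> nat -> nat -> R.
Variable n : nat.
Hypothesis Hp : Supp p n.

Lemma Dxx x y z : Derive (fun t => Derive (fun s => Pbox p n s y z) t) x =
  Pbox (fun a b e => INR (S (S a)) * INR (S a) * p (S (S a)) b e) n x y z.
Proof.
  rewrite (Derive_ext _ (fun t => rsum n (fun a => rsum n (fun b => rsum n (fun e => p a b e * (INR a * t ^ (a - 1)) * y ^ b * z ^ e))))).
  2: { intros t. apply is_derive_unique. unfold Pbox. apply (D_rsum3 n (fun a b e s => p a b e * s ^ a * y ^ b * z ^ e)).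
       intros. eapply D_ext. 3: apply (D_mono (p a b e) (y ^ b * z ^ e) a t). intros; cbv beta; ring. rring. }
  rewrite (is_derive_unique _ x (rsum n (fun a => rsum n (fun b => rsum n (fun e => p a b e * (INR a * (INR (a - 1) * x ^ (a - 1 - 1))) * y ^ b * z ^ e))))).
  2: { apply (D_rsum3 n (fun a b e s => p a b e * (INR a * s ^ (a - 1)) * y ^ b * z ^ e)).
       intros. eapply D_ext. 3: apply (D_mono (p a b e * INR a) (y ^ b * z ^ e) (a - 1) x). intros; cbv beta; ring. rring. }
  unfold Pbox. rewrite shift2.
  - apply rsum_ext. intros a _. apply rsum_ext. intros b _. apply rsum_ext. intros e _.
    replace (S (S a) - 1 - 1)%nat with a by lia. replace (S (S a) - 1)%nat with (S a) by lia. ring.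
  - apply rsum_zero. intros; apply rsum_zero. intros. simpl. ring.
  - apply rsum_zero. intros; apply rsum_zero. intros. simpl. ring.
  - intros i Hi. apply rsum_zero. intros; apply rsum_zero. intros. rewrite Hp by lia. ring.
Qed.

Lemma Dyy x y z : Derive (fun t => Derive (fun s => Pbox p n x s z) t) y =
  Pbox (fun a b e => INR (S (S b)) * INR (S b) * p a (S (S b)) e) n x y z.
Proof.
  rewrite (Derive_ext _ (fun t => rsum n (fun a => rsum n (fun b => rsum n (fun e => p a b e * x ^ a * (INR b * t ^ (b - 1)) * z ^ e))))).
  2: { intros t. apply is_derive_unique. unfold Pbox. apply (D_rsum3 n (fun a b e s => p a b e * x ^ a * s ^ b * z ^ e)).
       intros. eapply D_ext. 3: apply (D_mono (p a b e * x ^ a) (z ^ e) b t). intros; cbv beta; ring. rring. }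
  rewrite (is_derive_unique _ y (rsum n (fun a => rsum n (fun b => rsum n (fun e => p a b e * x ^ a * (INR b * (INR (b - 1) * y ^ (b - 1 - 1))) * z ^ e))))).
  2: { apply (D_rsum3 n (fun a b e s => p a b e * x ^ a * (INR b * s ^ (b - 1)) * z ^ e)).
       intros. eapply D_ext. 3: apply (D_mono (p a b e * x ^ a * INR b) (z ^ e) (b - 1) y). intros; cbv beta; ring. rring. }
  unfold Pbox. apply rsum_ext. intros a _. rewrite shift2.
  - apply rsum_ext. intros b _. apply rsum_ext. intros e _.
    replace (S (S b) - 1 - 1)%nat with b by lia. replace (S (S b) - 1)%nat with (S b) by lia. ring.
  - apply rsum_zero. intros. simpl. ring.
  - apply rsum_zero. intros. simpl. ring.
  - intros i Hi. apply rsum_zero. intros. rewrite Hp by lia. ring.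
Qed.

Lemma Dzz x y z : Derive (fun t => Derive (fun s => Pbox p n x y s) t) z =
  Pbox (fun a b e => INR (S (S e)) * INR (S e) * p a b (S (S e))) n x y z.
Proof.
  rewrite (Derive_ext _ (fun t => rsum n (fun a => rsum n (fun b => rsum n (fun e => p a b e * x ^ a * y ^ b * (INR e * t ^ (e - 1))))))).
  2: { intros t. apply is_derive_unique. unfold Pbox. apply (D_rsum3 n (fun a b e s => p a b e * x ^ a * y ^ b * s ^ e)).
       intros. eapply D_ext. 3: apply (D_mono (p a b e * x ^ a * y ^ b) 1 e t). intros; cbv beta; ring. rring. }
  rewrite (is_derive_unique _ z (rsum n (fun a => rsum n (fun b => rsum n (fun e => p a b e * x ^ a * y ^ b * (INR e * (INR (e - 1) * z ^ (e - 1 - 1)))))))).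
  2: { apply (D_rsum3 n (fun a b e s => p a b e * x ^ a * y ^ b * (INR e * s ^ (e - 1)))).
       intros. eapply D_ext. 3: apply (D_mono (p a b e * x ^ a * y ^ b * INR e) 1 (e - 1) z). intros; cbv beta; ring. rring. }
  unfold Pbox. apply rsum_ext. intros a _. apply rsum_ext. intros b _. rewrite shift2.
  - apply rsum_ext. intros e _.
    replace (S (S e) - 1 - 1)%nat with e by lia. replace (S (S e) - 1)%nat with (S e) by lia. ring.
  - simpl. ring.
  - simpl. ring.
  - intros i Hi. rewrite Hp by lia. ring.
Qed.

Definition Lop (a b e : nat) : R := INR (S (S a)) * INR (S a) * p (S (S a)) b e + INR (S (S b)) * INR (S b) * p a (S (S b)) e
   + INR (S (S e)) * INR (S e) * p a b (S (S e)).

Lemma lap_box x y z : lap3 (Pbox p n) x y z = Pbox Lop n x y z.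
Proof. unfold lap3. rewrite Dxx, Dyy, Dzz. unfold Pbox, Lop. rewrite <- !rsum_plus. apply rsum_ext. intros a _.
  rewrite <- !rsum_plus. apply rsum_ext. intros b _. rewrite <- !rsum_plus. apply rsum_ext. intros e _. ring. Qed.
End Lap.

Arguments inner : simpl never.
Arguments combo : simpl never.

Lemma U1 n q : (forall s, rsum n (fun a => q a * s ^ a) = 0) -> forall a, (a < n)%nat -> q a = 0.
Proof. revert q; induction n; intros q H a Ha. lia.
  assert (Hq0 : q O = 0).
  { specialize (H 0). rewrite rsum_front in H. rewrite rsum_zero in H. simpl in H. lra. intros; simpl; ring. }
  assert (Hd : forall s, rsum (S n) (fun a => q a * (INR a * s ^ (a - 1))) = 0).
  { intros s. assert (D : is_derive (fun s => rsum (S n) (fun a => q a * s ^ a)) s (rsum (S n) (fun a => q a * (INR a * s ^ (a - 1))))).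
    { apply (D_rsum (S n) (fun a s => q a * s ^ a)). intros i. eapply D_ext. 3: apply (D_mono (q i) 1 i s). intros; cbv beta; ring. rring. }
    assert (D2 : is_derive (fun _ : R => 0) s (rsum (S n) (fun a => q a * (INR a * s ^ (a - 1))))).
    { eapply (D_ext _ _ s). 3: exact D. intros; cbv beta; apply H. reflexivity. }
    apply is_derive_unique in D2. rewrite <- D2. apply is_derive_unique.
    apply (is_derive_const (V := R_NormedModule) 0 s). }
  assert (IH := IHn (fun i => q (S i) * INR (S i))).
  destruct a. auto.
  assert (q (S a) * INR (S a) = 0).
  { apply IH. 2: lia. intros s. specialize (Hd s). rewrite rsum_front in Hd.
    rewrite <- Hd. rewrite (rsum_ext _ _ (fun i => q (S i) * (INR (S i) * s ^ (S i - 1)))). change (INR 0) with 0. ring.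
    intros i _. replace (S i - 1)%nat with i by lia. ring. }
  assert (INR (S a) <> 0) by (apply not_0_INR; lia). nra.
Qed.

Lemma box_uniq p n : (forall x y z, Pbox p n x y z = 0) -> forall a b e, (a < n)%nat -> (b < n)%nat -> (e < n)%nat -> p a b e = 0.
Proof. intros H a b e Ha Hb He.
  assert (H1 : forall y z a, (a < n)%nat -> rsum n (fun b => rsum n (fun e => p a b e * y ^ b * z ^ e)) = 0).
  { intros y z. apply U1. intros x. rewrite <- (H x y z). unfold Pbox. apply rsum_ext. intros a' _.
    rewrite Rmult_comm, <- rsum_scal. apply rsum_ext. intros; rewrite <- rsum_scal. apply rsum_ext. intros; ring. }
  assert (H2 : forall z b, (b < n)%nat -> rsum n (fun e => p a b e * z ^ e) = 0).
  { intros z. apply U1. intros y. rewrite <- (H1 y z a Ha). apply rsum_ext. intros b' _.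
    rewrite Rmult_comm, <- rsum_scal. apply rsum_ext. intros; ring. }
  apply (U1 n (fun e => p a b e)). intros z. apply (H2 z b Hb). auto.
Qed.

Definition hom (k : nat) (r : nat -> nat -> R) (a b e : nat) : R := if Nat.eqb (a + b + e) k then r a b else 0.
Lemma hom_supp k r : Supp (hom k r) (S k).
Proof. intros a b e H. unfold hom. replace (Nat.eqb (a + b + e) k) with false; auto. symmetry; apply Nat.eqb_neq; lia. Qed.

Definition hreal (k : nat) (r : nat -> nat -> R) (x y z : R) : R :=
  rsum (S k) (fun a => rsum (S (k - a)) (fun b => r a b * (x ^ a * y ^ b * z ^ (k - a - b)))).

Lemma conv k r x y z : hreal k r x y z = Pbox (hom k r) (S k) x y z.
Proof. unfold hreal, Pbox. apply rsum_ext. intros a Ha.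
  rewrite (rsum_ext (S k) _ (fun b => if Nat.leb b (k - a) then r a b * (x ^ a * y ^ b * z ^ (k - a - b)) else 0)).
  - rewrite (rsum_tail (S k) (S (k - a))). apply rsum_ext. intros b Hb. replace (Nat.leb b (k - a)) with true; auto.
    symmetry; apply Nat.leb_le; lia. lia. intros i Hi. replace (Nat.leb i (k - a)) with false; auto. symmetry; apply Nat.leb_gt; lia.
  - intros b Hb. destruct (Nat.leb b (k - a)) eqn:Eb.
    + apply Nat.leb_le in Eb. rewrite (rsum_ext _ _ (fun e => if Nat.eqb e (k - a - b) then r a b * x ^ a * y ^ b * z ^ e else 0)).
      rewrite rsum_delta by lia. ring.
      intros e He. unfold hom. destruct (Nat.eqb_spec (a + b + e) k); destruct (Nat.eqb_spec e (k - a - b)); try lia; ring.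
    + apply Nat.leb_gt in Eb. apply rsum_zero. intros e He. unfold hom. replace (Nat.eqb (a + b + e) k) with false. ring.
      symmetry; apply Nat.eqb_neq; lia.
Qed.

Definition Rec (k : nat) (r : nat -> nat -> R) := forall a b, (a + b + 2 <= k)%nat ->
  INR (S (S a)) * INR (S a) * r (S (S a)) b + INR (S (S b)) * INR (S b) * r a (S (S b))
  + INR (k - a - b) * INR (k - a - b - 1) * r a b = 0.

Lemma harm_iff k r : (forall x y z, lap3 (hreal k r) x y z = 0) <-> Rec k r.
Proof.
  assert (E : hreal k r = Pbox (hom k r) (S k)).
  { apply functional_extensionality; intros x. apply functional_extensionality; intros y.
    apply functional_extensionality; intros z. apply conv. }
  rewrite E. split.
  - intros H a b Hab. assert (H1 : forall x y z, Pbox (Lop (hom k r)) (S k) x y z = 0).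
    { intros. rewrite <- lap_box. apply H. apply hom_supp. }
    assert (H2 := box_uniq _ _ H1 a b (k - a - b - 2) ltac:(lia) ltac:(lia) ltac:(lia)).
    unfold Lop, hom in H2. rewrite <- H2.
    replace (Nat.eqb (S (S a) + b + (k - a - b - 2)) k) with true by (symmetry; apply Nat.eqb_eq; lia).
    replace (Nat.eqb (a + S (S b) + (k - a - b - 2)) k) with true by (symmetry; apply Nat.eqb_eq; lia).
    replace (Nat.eqb (a + b + S (S (k - a - b - 2))) k) with true by (symmetry; apply Nat.eqb_eq; lia).
    replace (S (S (k - a - b - 2))) with (k - a - b)%nat by lia. replace (S (k - a - b - 2)) with (k - a - b - 1)%nat by lia. ring.
  - intros H x y z. rewrite lap_box by apply hom_supp. unfold Pbox. apply rsum_zero; intros a _.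
    apply rsum_zero; intros b _. apply rsum_zero; intros e _. unfold Lop, hom.
    destruct (Nat.eqb_spec (a + b + e + 2) k).
    + replace (Nat.eqb (S (S a) + b + e) k) with true by (symmetry; apply Nat.eqb_eq; lia).
      replace (Nat.eqb (a + S (S b) + e) k) with true by (symmetry; apply Nat.eqb_eq; lia).
      replace (Nat.eqb (a + b + S (S e)) k) with true by (symmetry; apply Nat.eqb_eq; lia).
      assert (HH := H a b ltac:(lia)). replace (k - a - b)%nat with (S (S e)) in HH by lia.
      replace (S (S e) - 1)%nat with (S e) in HH by lia. rewrite HH. ring.
    + replace (Nat.eqb (S (S a) + b + e) k) with false by (symmetry; apply Nat.eqb_neq; lia).
      replace (Nat.eqb (a + S (S b) + e) k) with false by (symmetry; apply Nat.eqb_neq; lia).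
      replace (Nat.eqb (a + b + S (S e)) k) with false by (symmetry; apply Nat.eqb_neq; lia). ring.
Qed.

Arguments inner : simpl never.
Arguments combo : simpl never.

Definition RecE (k : nat) (r : nat -> nat -> R) (a b : nat) : R :=
  INR (S (S a)) * INR (S a) * r (S (S a)) b + INR (S (S b)) * INR (S b) * r a (S (S b))
  + INR (k - a - b) * INR (k - a - b - 1) * r a b.
Lemma Rec_lin k r1 r2 al be : Rec k r1 -> Rec k r2 -> Rec k (fun a b => al * r1 a b + be * r2 a b).
Proof. intros H1 H2 a b H. change (RecE k (fun a b => al * r1 a b + be * r2 a b) a b = 0).
  assert (E1 := H1 a b H). assert (E2 := H2 a b H). change (RecE k r1 a b = 0) in E1. change (RecE k r2 a b = 0) in E2.
  transitivity (al * RecE k r1 a b + be * RecE k r2 a b). unfold RecE; ring. rewrite E1, E2; ring. Qed.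
Lemma Rec_zero k : Rec k (fun _ _ => 0).
Proof. intros a b H. ring. Qed.
Lemma Rec_ext k r1 r2 : (forall a b, r1 a b = r2 a b) -> Rec k r1 -> Rec k r2.
Proof. intros E H a b Hab. rewrite <- !E. apply H; auto. Qed.
Lemma Rec_rsum k N (r : nat -> nat -> nat -> R) (be : nat -> R) : (forall j, (j < N)%nat -> Rec k (r j)) ->
  Rec k (fun a b => rsum N (fun j => be j * r j a b)).
Proof. induction N; intros H. simpl. apply Rec_zero. simpl.
  apply (Rec_ext k (fun a b => 1 * rsum N (fun j => be j * r j a b) + be N * r N a b)). intros; ring.
  apply Rec_lin. apply IHN; intros; apply H; lia. apply H; lia. Qed.

Lemma Rec_zero_data k t : Rec k t -> (forall b, (b <= k)%nat -> t O b = 0) -> (forall b, (b + 1 <= k)%nat -> t 1%nat b = 0) ->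
  forall a b, (a + b <= k)%nat -> t a b = 0.
Proof. intros HR H0 H1.
  assert (G : forall a, (forall b, (a + b <= k)%nat -> t a b = 0) /\ (forall b, (S a + b <= k)%nat -> t (S a) b = 0)).
  { induction a. split; auto. intros; apply H1; lia.
    destruct IHa as [IH1 IH2]. split; auto. intros b Hb.
    assert (E := HR a b ltac:(lia)). rewrite IH1 in E by lia. rewrite (IH1 b) in E by lia.
    assert (INR (S (S a)) * INR (S a) <> 0) by (apply Rmult_integral_contrapositive; split; apply not_0_INR; lia).
    apply (Rmult_eq_reg_l (INR (S (S a)) * INR (S a))); auto. lra. }
  intros a b Hab. apply (proj1 (G a)); auto. Qed.

Lemma fst_hpoly_hreal k c : (fun x y z => fst (hpoly k c x y z)) = hreal k (fun a b => fst (c a b)).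
Proof. apply functional_extensionality; intros x. apply functional_extensionality; intros y.
  apply functional_extensionality; intros z. rewrite fst_hpoly. reflexivity. Qed.
Lemma snd_hpoly_hreal k c : (fun x y z => snd (hpoly k c x y z)) = hreal k (fun a b => snd (c a b)).
Proof. apply functional_extensionality; intros x. apply functional_extensionality; intros y.
  apply functional_extensionality; intros z. rewrite snd_hpoly. reflexivity. Qed.

Lemma lap_re k c x y z : lap3 (fun a b c0 => Re (hpoly k c a b c0)) x y z = lap3 (hreal k (fun a b => fst (c a b))) x y z.
Proof. unfold Re. rewrite fst_hpoly_hreal. reflexivity. Qed.
Lemma lap_im k c x y z : lap3 (fun a b c0 => Im (hpoly k c a b c0)) x y z = lap3 (hreal k (fun a b => snd (c a b))) x y z.
Proof. unfold Im. rewrite snd_hpoly_hreal. reflexivity. Qed.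

Lemma SH_iff k f : SH k f <-> exists c, (forall x y z, f x y z = hpoly k c x y z) /\
   Rec k (fun a b => fst (c a b)) /\ Rec k (fun a b => snd (c a b)).
Proof. split.
  - intros [Hh Hl]. destruct (HP_get _ _ Hh) as [c Hc]. exists c. split; auto.
    assert (Ef : f = hpoly k c) by (apply fun3_ext; auto). rewrite Ef in Hl.
    split; apply harm_iff; intros x y z; [rewrite <- lap_re; exact (proj1 (Hl x y z)) | rewrite <- lap_im; exact (proj2 (Hl x y z))].
  - intros [c [Hc [H1 H2]]]. assert (Ef : f = hpoly k c) by (apply fun3_ext; auto). rewrite Ef.
    split. exists c; auto. intros x y z. split.
    + rewrite lap_re. apply harm_iff; auto.
    + rewrite lap_im. apply harm_iff; auto.
Qed.

Lemma SH_add k f g : SH k f -> SH k g -> SH k (fadd f g).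
Proof. intros Hf Hg. apply SH_iff in Hf, Hg. destruct Hf as [c [Hc [Hc1 Hc2]]]. destruct Hg as [d [Hd [Hd1 Hd2]]].
  apply SH_iff. exists (fun a b => Cplus (c a b) (d a b)). split.
  intros. unfold fadd. rewrite Hc, Hd. apply hpoly_plus.
  split; eapply Rec_ext; [| apply (Rec_lin k _ _ 1 1 Hc1 Hd1) | | apply (Rec_lin k _ _ 1 1 Hc2 Hd2)]; intros; simpl; ring. Qed.
Lemma SH_scal k e f : SH k f -> SH k (fscal e f).
Proof. intros Hf. apply SH_iff in Hf. destruct Hf as [c [Hc [Hc1 Hc2]]].
  apply SH_iff. exists (fun a b => Cmult e (c a b)). split.
  intros. unfold fscal. rewrite Hc. apply hpoly_scal.
  split; eapply Rec_ext; [| apply (Rec_lin k _ _ (fst e) (- snd e) Hc1 Hc2) | | apply (Rec_lin k _ _ (snd e) (fst e) Hc1 Hc2)]; intros; simpl; ring. Qed.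
Lemma SH_zero k : SH k (fun _ _ _ => RtoC 0).
Proof. apply SH_iff. exists (fun _ _ => RtoC 0). split. intros. symmetry. apply csum_zero; intros; apply csum_zero; intros; cring.
  split; eapply Rec_ext; [| apply Rec_zero | | apply Rec_zero]; intros; simpl; ring. Qed.
Lemma SH_HP k f : SH k f -> homog_poly k f.
Proof. intros [H _]; auto. Qed.

Lemma hpoly_uniq k c : (forall x y z, hpoly k c x y z = RtoC 0) -> forall a b, (a + b <= k)%nat -> c a b = RtoC 0.
Proof. intros H a b Hab.
  assert (G : forall r, (forall x y z, hreal k r x y z = 0) -> r a b = 0).
  { intros r Hr. assert (Hb : forall x y z, Pbox (hom k r) (S k) x y z = 0) by (intros; rewrite <- conv; auto).
    assert (E := box_uniq _ _ Hb a b (k - a - b) ltac:(lia) ltac:(lia) ltac:(lia)). unfold hom in E.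
    replace (Nat.eqb (a + b + (k - a - b)) k) with true in E; auto. symmetry; apply Nat.eqb_eq; lia. }
  apply Cext.
  - apply (G (fun a b => fst (c a b))). intros. unfold hreal. rewrite <- fst_hpoly. rewrite H. reflexivity.
  - apply (G (fun a b => snd (c a b))). intros. unfold hreal. rewrite <- snd_hpoly. rewrite H. reflexivity.
Qed.

Lemma combo_hpoly k N (al : nat -> C) (cj : nat -> nat -> nat -> C) x y z :
  combo N al (fun j => hpoly k (cj j)) x y z = hpoly k (fun a b => csum N (fun j => Cmult (al j) (cj j a b))) x y z.
Proof. unfold combo, hpoly.
  rewrite (csum_ext N _ (fun j => csum (S k) (fun a => csum (S (k - a)) (fun b => Cmult (al j) (Cmult (cj j a b) (RtoC (x ^ a * y ^ b * z ^ (k - a - b)))))))).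
  rewrite csum_swap. apply csum_ext. intros a _. rewrite csum_swap. apply csum_ext. intros b _.
  rewrite (csum_ext N _ (fun j => Cmult (RtoC (x ^ a * y ^ b * z ^ (k - a - b))) (Cmult (al j) (cj j a b)))).
  rewrite csum_scal. generalize (csum N (fun j => Cmult (al j) (cj j a b))). intros [q1 q2]. cring.
  intros j _. generalize (al j) (cj j a b). intros [q1 q2] [q3 q4]. cring.
  intros j _. rewrite <- csum_scal. apply csum_ext. intros a _. rewrite <- csum_scal. apply csum_ext. intros b _. auto.
Qed.

Section Basis.
Variable k : nat.
Fixpoint coefR (d0 d1 : nat -> R) (a : nat) : nat -> R :=
  match a with
  | O => d0
  | S O => d1
  | S (S a') => fun b => - (INR (S (S b)) * INR (S b) * coefR d0 d1 a' (S (S b)) + INR (k - a' - b) * INR (k - a' - b - 1) * coefR d0 d1 a' b)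
                 / (INR (S (S a')) * INR (S a'))
  end.
Lemma coefR_Rec d0 d1 : Rec k (coefR d0 d1).
Proof. intros a b H. change (coefR d0 d1 (S (S a)) b) with (- (INR (S (S b)) * INR (S b) * coefR d0 d1 a (S (S b)) + INR (k - a - b) * INR (k - a - b - 1) * coefR d0 d1 a b)
                 / (INR (S (S a)) * INR (S a))).
  field. split; apply not_0_INR; lia. Qed.

Definition d0 (j b : nat) : R := if Nat.eqb j b then 1 else 0.
Definition d1 (j b : nat) : R := if Nat.eqb j (S k + b) then 1 else 0.
Definition hc (j : nat) := coefR (d0 j) (d1 j).
Definition hb (j : nat) : fun3 := hpoly k (fun a b => RtoC (hc j a b)).
Definition NN := (2 * k + 1)%nat.

Lemma hb_SH j : SH k (hb j).
Proof. apply SH_iff. exists (fun a b => RtoC (hc j a b)). split; auto. split.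
  apply coefR_Rec. eapply Rec_ext. 2: apply Rec_zero. intros; auto. Qed.

Lemma kron_d0 i b : RtoC (d0 i b) = kron i b.
Proof. unfold d0, kron. destruct (Nat.eqb i b); auto. Qed.
Lemma kron_d1 i b : RtoC (d1 i b) = kron i (S k + b).
Proof. unfold d1, kron. destruct (Nat.eqb i (S k + b)); auto. Qed.

Lemma hb_indep : Indep NN hb.
Proof. intros al Hz j Hj.
  assert (Hz2 : forall x y z, hpoly k (fun a b => csum NN (fun i => Cmult (al i) (RtoC (hc i a b)))) x y z = RtoC 0).
  { intros. rewrite <- combo_hpoly. apply Hz. }
  assert (U := hpoly_uniq _ _ Hz2). unfold NN in *.
  destruct (Nat.le_gt_cases j k).
  - assert (E := U O j ltac:(lia)). rewrite (csum_ext _ _ (fun i => Cmult (al i) (kron i j))) in E.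
    rewrite csum_kron in E; auto. intros i _. unfold hc. simpl. rewrite kron_d0. auto.
  - assert (E := U 1%nat (j - S k)%nat ltac:(lia)). rewrite (csum_ext _ _ (fun i => Cmult (al i) (kron i j))) in E.
    rewrite csum_kron in E; auto. intros i _. unfold hc. simpl. rewrite kron_d1. replace (S k + (j - S k))%nat with j by lia. auto.
Qed.

Lemma hb_span f : SH k f -> InSpan NN hb f.
Proof. intros Hf. apply SH_iff in Hf. destruct Hf as [c [Hc [Hc1 Hc2]]].
  pose (al := fun j => if Nat.leb j k then c O j else c 1%nat (j - S k)%nat).
  exists al.
  assert (Key : forall (g : C -> R), (forall u v, g (Cplus u v) = g u + g v) -> (forall u r, g (Cmult u (RtoC r)) = g u * r) -> g (RtoC 0) = 0 ->
     Rec k (fun a b => g (c a b)) ->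
     forall a b, (a + b <= k)%nat -> g (c a b) = g (csum NN (fun j => Cmult (al j) (RtoC (hc j a b))))).
  { intros g gP gM g0 HR.
    assert (Gs : forall a b, g (csum NN (fun j => Cmult (al j) (RtoC (hc j a b)))) = rsum NN (fun j => g (al j) * hc j a b)).
    { intros a b. generalize NN. induction n; simpl; auto. rewrite gP, gM, IHn. auto. }
    pose (t := fun a b => g (c a b) + (-1) * rsum NN (fun j => g (al j) * hc j a b)).
    assert (Ht : Rec k t). { apply (Rec_ext k (fun a b => 1 * g (c a b) + (-1) * rsum NN (fun j => g (al j) * hc j a b))).
      intros; unfold t; ring. apply Rec_lin; auto. apply (Rec_rsum k NN (fun j => hc j) (fun j => g (al j))). intros; apply coefR_Rec. }
    intros a b Hab. rewrite Gs. assert (E := Rec_zero_data k t Ht). unfold t in E.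
    cut (g (c a b) + -1 * rsum NN (fun j => g (al j) * hc j a b) = 0). lra.
    apply E; auto.
    - intros b0 Hb0. rewrite (rsum_ext _ _ (fun j => if Nat.eqb j b0 then g (al j) else 0)).
      rewrite rsum_delta by (unfold NN; lia). unfold al. replace (Nat.leb b0 k) with true by (symmetry; apply Nat.leb_le; lia). ring.
      intros j _. change (hc j O b0) with (d0 j b0). unfold d0. destruct (Nat.eqb j b0); ring.
    - intros b0 Hb0. rewrite (rsum_ext _ _ (fun j => if Nat.eqb j (S k + b0) then g (al j) else 0)).
      rewrite rsum_delta by (unfold NN; lia). unfold al. replace (Nat.leb (S k + b0) k) with false by (symmetry; apply Nat.leb_gt; lia).
      replace (S k + b0 - S k)%nat with b0 by lia. ring.
      intros j _. change (hc j 1%nat b0) with (d1 j b0). unfold d1. destruct (Nat.eqb j (S k + b0)); ring. }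
  intros x y z. rewrite Hc. unfold hb. rewrite combo_hpoly. unfold hpoly. apply csum_ext. intros a Ha. apply csum_ext. intros b Hb.
  f_equal. apply Cext.
  - apply (Key (fun u => fst u)); [intros; simpl; ring | intros; simpl; ring | reflexivity | exact Hc1 | lia].
  - apply (Key (fun u => snd u)); [intros; simpl; ring | intros; simpl; ring | reflexivity | exact Hc2 | lia].
Qed.
End Basis.

Arguments inner : simpl never.
Arguments combo : simpl never.

Lemma rpow_nonneg x y : 0 <= rpow x y.
Proof. unfold rpow. destruct (Rle_dec x 0). lra. unfold Rpower. apply Rlt_le, exp_pos. Qed.
Lemma Lp_nonneg p g : 0 <= Lp_norm p g.
Proof. unfold Lp_norm, Lp_norm_sph. apply rpow_nonneg. Qed.
Lemma Lps_nonneg p g : 0 <= Lp_norm_sph p g.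
Proof. unfold Lp_norm_sph. apply rpow_nonneg. Qed.
Lemma rsum_mono_len m N F : (m <= N)%nat -> (forall i, 0 <= F i) -> rsum m F <= rsum N F.
Proof. induction 1; intros HF. lra. simpl. specialize (IHle HF). specialize (HF m0). lra. Qed.

Lemma ONB_exists k m u : orthonormal m u -> (forall i, (i < m)%nat -> SH k (u i)) ->
  exists e, ONB_SH k e /\ (forall i, (i < m)%nat -> e i = u i).
Proof. intros Ho Hu.
  assert (VH := SH_HP k). assert (VA := SH_add k). assert (VS := SH_scal k). assert (VZ := SH_zero k).
  destruct (GS_indep k (SH k) VH VA VS VZ (NN k) (hb k)) as [f [Hof [HVf Hsf]]].
  intros; apply hb_SH. apply hb_indep.
  destruct (GS_main k (SH k) VH VA VS VZ m u (NN k) (hb k) Ho Hu) as [n [e [Hm [Hoe [HVe [Hpre Hse]]]]]].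
  intros; apply hb_SH.
  assert (Sf : forall g, SH k g -> InSpan (NN k) f g).
  { intros g Hg. destruct (hb_span k g Hg) as [a Ha]. eapply InSpan_ext. intros; symmetry; apply Ha. apply InSpan_combo. auto. }
  assert (Se : forall g, SH k g -> InSpan n e g).
  { intros g Hg. destruct (hb_span k g Hg) as [a Ha]. eapply InSpan_ext. intros; symmetry; apply Ha. apply InSpan_combo. auto. }
  assert (D1 : (n <= NN k)%nat). { apply (DIM k (NN k) f n e); auto. }
  assert (D2 : (NN k <= n)%nat). { apply (DIM k n e (NN k) f); auto. }
  assert (En : n = NN k) by lia. subst n.
  exists e. split; auto. split; [|split].
  - intros i Hi. apply HVe. exact Hi.
  - exact Hoe.
  - intros g Hg. destruct (Se g Hg) as [a Ha]. exists a. exact Ha.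
Qed.

Theorem corollary1p4 (D : R) (hD0 : 0 < D) (hD1 : D < 1)
  (hyp : exists K0 : nat, forall k : nat, (K0 <= k)%nat ->
     exists u : nat -> fun3,
       (forall i, (i < mD D k)%nat -> SH k (u i)) /\
       orthonormal (mD D k) u /\
       (forall i (p : R), (i < mD D k)%nat -> 2 < p <= 6 ->
          Lp_norm p (u i) >= / 2 * Lp_norm_sph p (Qk k))) :
  exists K0 : nat, forall k : nat, (K0 <= k)%nat ->
    exists u : nat -> fun3,
      ONB_SH k u /\
      (forall p : R, 2 < p <= 6 ->
         / INR (2 * k + 1) * rsum (2 * k + 1) (fun i => Lp_norm p (u i))
           >= D / 3 * Lp_norm_sph p (Qk k)).
Proof.
  destruct hyp as [K1 HK1].
  destruct (archimed (3 / D)) as [Hup _].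
  assert (Hup0 : (0 <= up (3 / D))%Z).
  { apply le_IZR. assert (0 < 3 / D) by (apply Rdiv_lt_0_compat; lra). lra. }
  set (K2 := Z.to_nat (up (3 / D))).
  assert (HK2 : 3 / D < INR K2). { unfold K2. rewrite INR_IZR_INZ, Z2Nat.id by auto. lra. }
  exists (max K1 K2). intros k Hk.
  destruct (HK1 k ltac:(lia)) as [u [Hu [Ho Hn]]].
  destruct (ONB_exists k (mD D k) u Ho Hu) as [e [He Hpre]].
  exists e. split; auto. intros p Hp.
  set (N := (2 * k + 1)%nat). set (m := mD D k). set (Q := Lp_norm_sph p (Qk k)).
  assert (HQ : 0 <= Q) by apply Lps_nonneg.
  assert (HN : 0 < INR N) by (apply lt_0_INR; unfold N; lia).
  assert (HkN : INR K2 <= INR N) by (apply le_INR; unfold N; lia).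
  assert (HDN : 3 <= D * INR N).
  { assert (3 / D * D = 3) by (field; lra). nra. }
  assert (Hm : 2 / 3 * (D * INR N) <= INR m).
  { unfold m, mD. fold N. destruct (base_Int_part (D * INR N)) as [B1 B2].
    assert (Hip : (0 <= Int_part (D * INR N))%Z) by (apply le_IZR; lra).
    rewrite (INR_IZR_INZ (Z.to_nat _)), Z2Nat.id by auto. lra. }
  assert (HmN : (m <= N)%nat).
  { apply INR_le. unfold m, mD. fold N. destruct (base_Int_part (D * INR N)) as [B1 B2].
    assert (Hip : (0 <= Int_part (D * INR N))%Z) by (apply le_IZR; lra).
    rewrite (INR_IZR_INZ (Z.to_nat _)), Z2Nat.id by auto. nra. }
  assert (HS : INR m * (/ 2 * Q) <= rsum N (fun i => Lp_norm p (e i))).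
  { eapply Rle_trans. 2: apply rsum_mono_len; [exact HmN | intros; apply Lp_nonneg].
    rewrite <- rsum_const. apply rsum_le. intros i Hi. rewrite Hpre by auto. apply Rge_le. apply Hn; auto. }
  apply Rle_ge.
  assert (HiN : 0 < / INR N) by (apply Rinv_0_lt_compat; auto).
  apply Rle_trans with (/ INR N * (INR m * (/ 2 * Q))).
  - apply Rle_trans with (/ INR N * (2 / 3 * (D * INR N) * (/ 2 * Q))).
    + right. field. lra.
    + apply Rmult_le_compat_l. lra. apply Rmult_le_compat_r. lra. auto.
  - apply Rmult_le_compat_l. lra. auto.
Qed.
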